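(* $[\mathbf{Txt}\mathbf{Sd}\mathbf{Ex}] \setminus [\mathcal{R}\mathbf{Txt}\mathbf{Sd}\mathbf{Ex}] \neq \emptyset$; that is, there is a class of languages that can be $\mathbf{Txt}\mathbf{Sd}\mathbf{Ex}$-learned by some (possibly partial) computable learner but by no total computable learner.
   Context: Fix an acceptable numbering $(\varphi_e)$ of partial computable functions, $W_e=\mathrm{dom}(\varphi_e)$. A text is a total function $T:\mathbb N\to\mathbb N\cup\{\#\}$, $\mathrm{content}(T)=\mathrm{range}(T)\setminus\{\#\}$, $T[n]=(T(0),\dots,T(n-1))$; $\mathbf{Txt}(L)$ is the set of texts with content $L$. Learners are partial computable functions; $\mathbf{Sd}(h,T)(i)=h(\mathrm{content}(T[i]))$. For total $p$ and text $T$: $\mathbf{Ex}(p,T)$ iff $\exists n_0\,\forall n\ge n_0: p(n)=p(n_0)\wedge W_{p(n_0)}=\mathrm{content}(T)$. $h$ $\mathbf{Txt}\mathbf{Sd}\mathbf{Ex}$-learns $L$ iff for every $T\in\mathbf{Txt}(L)$, $\mathbf{Sd}(h,T)$ is total and $\mathbf{Ex}(\mathbf{Sd}(h,T),T)$. $[\mathbf{Txt}\mathbf{Sd}\mathbf{Ex}]$ is the set of classes learnable by a single learner; $[\mathcal R\mathbf{Txt}\mathbf{Sd}\mathbf{Ex}]$ is the same with the learner required to be a total computable function ($\mathcal R$ = total computable functions). *)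

(* Defs.v *)
From Stdlib Require Import Arith List.
Import ListNotations.

Inductive prog : Type :=
| PZero : prog
| PSucc : prog
| PProj : nat -> prog
| PComp : prog -> list prog -> prog
| PPrec : prog -> prog -> prog
| PMu   : prog -> prog.

Inductive eval : prog -> list nat -> nat -> Prop :=
| ev_zero : forall args, eval PZero args 0
| ev_succ : forall x args, eval PSucc (x :: args) (S x)
| ev_proj : forall i args, eval (PProj i) args (nth i args 0)
| ev_comp : forall f gs args ys y,
    Forall2 (fun g v => eval g args v) gs ys ->
    eval f ys y ->
    eval (PComp f gs) args y
| ev_prec0 : forall f g args y,
    eval f args y -> eval (PPrec f g) (0 :: args) y
| ev_precS : forall f g x args r y,
    eval (PPrec f g) (x :: args) r ->
    eval g (x :: r :: args) y ->
    eval (PPrec f g) (S x :: args) y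
| ev_mu : forall f args y,
    eval f (y :: args) 0 ->
    (forall z, z < y -> exists v, v <> 0 /\ eval f (z :: args) v) ->
    eval (PMu f) args y.

Definition npair (a b : nat) : nat := 2 ^ a * (2 * b + 1).

Fixpoint code (p : prog) : nat :=
  match p with
  | PZero => npair 0 0
  | PSucc => npair 1 0
  | PProj i => npair 2 i
  | PComp f gs =>
      let fix code_list (l : list prog) : nat :=
        match l with
        | [] => 0
        | g :: l' => npair (code g) (code_list l')
        end in
      npair 3 (npair (code f) (code_list gs))
  | PPrec f g => npair 4 (npair (code f) (code g))
  | PMu f => npair 5 (code f)
  end.

(** The numbering: phi e x = y iff e codes a program computing y on input x;
    numbers that code no program denote the everywhere-undefined function. *)
Definition phi (e x y : nat) : Prop :=
  exists p : prog, code p = e /\ eval p [x] y.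

Definition W (e : nat) (x : nat) : Prop := exists y, phi e x y.

(** * Texts; [None] plays the role of the pause symbol # *)
Definition text := nat -> option nat.

Definition content (T : text) (x : nat) : Prop := exists n, T n = Some x.

Definition Txt (L : nat -> Prop) (T : text) : Prop :=
  forall x, content T x <-> L x.

(** Canonical index of the finite set content(T[i]) = {T(j) | j < i, T(j) <> #}:
    the number whose binary expansion has bit x set iff x is in the set. *)
Fixpoint content_code (T : text) (i : nat) : nat :=
  match i with
  | 0 => 0
  | S i' =>
      match T i' with
      | Some x => Nat.lor (content_code T i') (2 ^ x)
      | None => content_code T i'
      end
  end.

Definition Ex (p : nat -> nat) (T : text) : Prop :=
  exists n0, forall n, n0 <= n ->
    p n = p n0 /\ (forall x, W (p n0) x <-> content T x).

(** The learner with index h TxtSdEx-learns L:  for every text T for L,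
    Sd(h,T)(i) = phi_h(content(T[i])) is total (given by some p) and Ex(p,T). *)
Definition TxtSdEx_learns (h : nat) (L : nat -> Prop) : Prop :=
  forall T : text, Txt L T ->
    exists p : nat -> nat,
      (forall i, phi h (content_code T i) (p i)) /\ Ex p T.

Definition lang_class := (nat -> Prop) -> Prop.

Definition TxtSdEx_learns_class (h : nat) (C : lang_class) : Prop :=
  forall L, C L -> TxtSdEx_learns h L.

Definition in_TxtSdEx (C : lang_class) : Prop :=
  exists h, TxtSdEx_learns_class h C.

Definition total_index (h : nat) : Prop := forall x, exists y, phi h x y.

Definition in_RTxtSdEx (C : lang_class) : Prop :=
  exists h, total_index h /\ TxtSdEx_learns_class h C.

(* Main.v *)
Require Import Defs.
From Stdlib Require Import Arith List Lia Setoid Morphisms ClassicalEpsilon Classical_Prop.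
Import ListNotations.

Module F1.

Section EvalInd.
Variable Q : prog -> list nat -> nat -> Prop.
Hypothesis Hz : forall args, Q PZero args 0.
Hypothesis Hs : forall x args, Q PSucc (x :: args) (S x).
Hypothesis Hp : forall i args, Q (PProj i) args (nth i args 0).
Hypothesis Hc : forall f gs args ys y,
    Forall2 (fun g v => eval g args v /\ Q g args v) gs ys ->
    eval f ys y -> Q f ys y -> Q (PComp f gs) args y.
Hypothesis Hp0 : forall f g args y, eval f args y -> Q f args y -> Q (PPrec f g) (0 :: args) y.
Hypothesis HpS : forall f g x args r y,
    eval (PPrec f g) (x :: args) r -> Q (PPrec f g) (x :: args) r ->
    eval g (x :: r :: args) y -> Q g (x :: r :: args) y ->
    Q (PPrec f g) (S x :: args) y.
Hypothesis Hm : forall f args y,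
    eval f (y :: args) 0 -> Q f (y :: args) 0 ->
    (forall z, z < y -> exists v, v <> 0 /\ eval f (z :: args) v /\ Q f (z :: args) v) ->
    Q (PMu f) args y.

Fixpoint eval_ind2 p a y (H : eval p a y) {struct H} : Q p a y :=
  match H in eval p a y return Q p a y with
  | ev_zero args => Hz args
  | ev_succ x args => Hs x args
  | ev_proj i args => Hp i args
  | ev_comp f gs args ys y HF Hf =>
      Hc f gs args ys y
        ((fix F gs ys (HF : Forall2 (fun g v => eval g args v) gs ys)
            : Forall2 (fun g v => eval g args v /\ Q g args v) gs ys :=
          match HF in Forall2 _ gs ys return Forall2 (fun g v => eval g args v /\ Q g args v) gs ys with
          | Forall2_nil _ => Forall2_nil _
          | @Forall2_cons _ _ _ g v gs' ys' Hg HF' =>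
              Forall2_cons g v (conj Hg (eval_ind2 g args v Hg)) (F gs' ys' HF')
          end) gs ys HF) Hf (eval_ind2 f ys y Hf)
  | ev_prec0 f g args y Hf => Hp0 f g args y Hf (eval_ind2 f args y Hf)
  | ev_precS f g x args r y H1 H2 =>
      HpS f g x args r y H1 (eval_ind2 _ _ _ H1) H2 (eval_ind2 _ _ _ H2)
  | ev_mu f args y H0 Hlt =>
      Hm f args y H0 (eval_ind2 _ _ _ H0)
        (fun z hz => match Hlt z hz with
                     | ex_intro _ v (conj hv he) => ex_intro _ v (conj hv (conj he (eval_ind2 _ _ _ he)))
                     end)
  end.
End EvalInd.

Lemma eval_det : forall p a y, eval p a y -> forall y', eval p a y' -> y = y'.
Proof.
  apply (eval_ind2 (fun p a y => forall y', eval p a y' -> y = y')).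
  - intros args y' H; inversion H; auto.
  - intros x args y' H; inversion H; auto.
  - intros i args y' H; inversion H; auto.
  - intros f gs args ys y HF Hf IH y' H. inversion H; subst.
    match goal with H3 : Forall2 _ gs ?ys0, H5 : eval f ?ys0 y' |- _ =>
      assert (ys = ys0) as <-; [ | apply IH; exact H5 ];
      clear - HF H3; revert ys0 H3; induction HF; intros ys0 H3; inversion H3; subst; auto;
      f_equal; [ destruct H as [_ H]; apply H; auto | apply IHHF; auto ] end.
  - intros f g args y Hf IH y' H. inversion H; subst. apply IH; auto.
  - intros f g x args r y H1 IH1 H2 IH2 y' H. inversion H; subst.
    match goal with H6 : eval (PPrec f g) (x :: args) ?r0, H7 : eval g _ _ |- _ =>
      apply IH1 in H6; subst; apply IH2; exact H7 end.
  - intros f args y H0 IH0 Hlt y' H. inversion H; subst.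
    destruct (Nat.lt_trichotomy y y') as [Hl|[Hl|Hl]]; auto.
    + match goal with H4 : forall z, z < y' -> _ |- _ =>
        destruct (H4 y Hl) as [v [hv he]] end. apply IH0 in he. congruence.
    + destruct (Hlt y' Hl) as [v [hv [he IH]]].
      match goal with H2 : eval f (y' :: args) 0 |- _ => apply IH in H2 end. congruence.
Qed.

Lemma ev_val p l y y' : eval p l y -> y = y' -> eval p l y'.
Proof. intros; subst; auto. Qed.
Lemma evc f gs l ys y : Forall2 (fun g v => eval g l v) gs ys -> eval f ys y -> eval (PComp f gs) l y.
Proof. intros; econstructor; eauto. Qed.

Create HintDb evdb.
#[export] Hint Resolve evc : evdb.
#[export] Hint Constructors Forall2 : evdb.
#[export] Hint Resolve ev_zero ev_succ ev_proj : evdb.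
Ltac ev_step := first [ solve [ eauto 1 with evdb ]
                      | (eapply evc; [ ev_list | ev_step ]) ]
with ev_list := match goal with
  | |- Forall2 _ [] _ => constructor
  | |- Forall2 _ (_ :: _) _ => eapply Forall2_cons; [ ev_step | ev_list ]
  end.
Ltac solve_ev := first [ ev_step | ev_list ].
Ltac evt := eapply ev_val; [ solve_ev | cbn [nth]; try reflexivity ].

Lemma ev_prec_gen f g rest (R : nat -> nat) :
  eval f rest (R 0) -> (forall x, eval g (x :: R x :: rest) (R (S x))) ->
  forall x, eval (PPrec f g) (x :: rest) (R x).
Proof. intros H0 HS x. induction x. constructor; auto. econstructor; eauto. Qed.

Lemma ev_mu_gen f l (F : nat -> nat) y :
  (forall z, z <= y -> eval f (z :: l) (F z)) -> F y = 0 -> (forall z, z < y -> F z <> 0) ->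
  eval (PMu f) l y.
Proof.
  intros H H0 H1. constructor. rewrite <- H0. apply H; lia.
  intros z hz. exists (F z). split. apply H1; auto. apply H; lia.
Qed.

Definition P i := PProj i.
Lemma P_ok i l : eval (P i) l (nth i l 0). Proof. constructor. Qed.
#[export] Hint Resolve P_ok : evdb.
Definition SUC := PComp PSucc [PProj 0].
Lemma SUC_ok l : eval SUC l (S (nth 0 l 0)). Proof. evt. Qed.
#[export] Hint Resolve SUC_ok : evdb.
Fixpoint cst n := match n with 0 => PZero | S m => PComp PSucc [cst m] end.
Lemma cst_ok n l : eval (cst n) l n.
Proof. induction n; simpl. constructor. eapply evc. constructor; eauto. constructor. Qed.
#[export] Hint Resolve cst_ok : evdb.

Definition prec1 f g := PComp (PPrec f g) [PProj 0].
Definition prec2 f g := PComp (PPrec f g) [PProj 0; PProj 1].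
Definition prec3 f g := PComp (PPrec f g) [PProj 0; PProj 1; PProj 2].
Definition prec4 f g := PComp (PPrec f g) [PProj 0; PProj 1; PProj 2; PProj 3].

Definition ADD := prec2 (P 0) (PComp SUC [P 1]).
Lemma ADD_ok l : eval ADD l (nth 0 l 0 + nth 1 l 0).
Proof.
  unfold ADD, prec2. eapply evc. solve_ev.
  apply (ev_prec_gen _ _ _ (fun x => x + nth 1 l 0)). evt. intros x; evt.
Qed.
#[export] Hint Resolve ADD_ok : evdb.
Definition MUL := prec2 PZero (PComp ADD [P 1; P 2]).
Lemma MUL_ok l : eval MUL l (nth 0 l 0 * nth 1 l 0).
Proof.
  unfold MUL, prec2. eapply evc. solve_ev.
  apply (ev_prec_gen _ _ _ (fun x => x * nth 1 l 0)). evt. intros x; evt. lia.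
Qed.
#[export] Hint Resolve MUL_ok : evdb.
Definition PRED := prec1 PZero (P 0).
Lemma PRED_ok l : eval PRED l (pred (nth 0 l 0)).
Proof.
  unfold PRED, prec1. eapply evc. solve_ev.
  apply (ev_prec_gen _ _ _ (fun x => pred x)). evt. intros x; evt.
Qed.
#[export] Hint Resolve PRED_ok : evdb.
Definition SUBR := prec2 (P 0) (PComp PRED [P 1]).
Definition SUB := PComp SUBR [P 1; P 0].
Lemma SUB_ok l : eval SUB l (nth 0 l 0 - nth 1 l 0).
Proof.
  unfold SUB, SUBR, prec2. eapply evc. solve_ev. eapply evc. solve_ev.
  apply (ev_prec_gen _ _ _ (fun x => nth 0 l 0 - x)). evt. lia. intros x; evt. lia.
Qed.
#[export] Hint Resolve SUB_ok : evdb.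
Definition sg x := match x with 0 => 0 | _ => 1 end.
Definition nsg x := match x with 0 => 1 | _ => 0 end.
Definition SG := prec1 PZero (cst 1).
Lemma SG_ok l : eval SG l (sg (nth 0 l 0)).
Proof.
  unfold SG, prec1. eapply evc. solve_ev.
  apply (ev_prec_gen _ _ _ (fun x => sg x)). evt. intros x; evt.
Qed.
#[export] Hint Resolve SG_ok : evdb.
Definition NSG := prec1 (cst 1) PZero.
Lemma NSG_ok l : eval NSG l (nsg (nth 0 l 0)).
Proof.
  unfold NSG, prec1. eapply evc. solve_ev.
  apply (ev_prec_gen _ _ _ (fun x => nsg x)). evt. intros x; evt.
Qed.
#[export] Hint Resolve NSG_ok : evdb.
Definition EQN := PComp NSG [PComp ADD [SUB; PComp SUB [P 1; P 0]]].
Lemma EQN_ok l : eval EQN l (Nat.b2n (nth 0 l 0 =? nth 1 l 0)).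
Proof.
  evt. destruct (Nat.eqb_spec (nth 0 l 0) (nth 1 l 0)).
  rewrite e, Nat.sub_diag; reflexivity.
  destruct (nth 0 l 0 - nth 1 l 0 + (nth 1 l 0 - nth 0 l 0)) eqn:E; simpl; auto. lia.
Qed.
#[export] Hint Resolve EQN_ok : evdb.
Definition LTN := PComp SG [PComp SUB [P 1; P 0]].
Lemma LTN_ok l : eval LTN l (Nat.b2n (nth 0 l 0 <? nth 1 l 0)).
Proof.
  evt. destruct (Nat.ltb_spec (nth 0 l 0) (nth 1 l 0));
  destruct (nth 1 l 0 - nth 0 l 0) eqn:E; simpl; auto; lia.
Qed.
#[export] Hint Resolve LTN_ok : evdb.
Definition ITE := PComp ADD [PComp MUL [P 1; PComp SG [P 0]]; PComp MUL [P 2; PComp NSG [P 0]]].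
Lemma ITE_ok l : eval ITE l (if nth 0 l 0 =? 0 then nth 2 l 0 else nth 1 l 0).
Proof. evt. destruct (nth 0 l 0); simpl; lia. Qed.
#[export] Hint Resolve ITE_ok : evdb.
Definition POW2 := prec1 (cst 1) (PComp MUL [P 1; cst 2]).
Lemma POW2_ok l : eval POW2 l (2 ^ nth 0 l 0).
Proof.
  unfold POW2, prec1. eapply evc. solve_ev.
  apply (ev_prec_gen _ _ _ (fun x => 2 ^ x)). evt. intros x; evt. simpl; lia.
Qed.
#[export] Hint Resolve POW2_ok : evdb.
Definition NPAIR := PComp MUL [PComp POW2 [P 0]; PComp SUC [PComp ADD [P 1; P 1]]].
Lemma NPAIR_ok l : eval NPAIR l (npair (nth 0 l 0) (nth 1 l 0)).
Proof. evt. unfold npair. f_equal. lia. Qed.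
#[export] Hint Resolve NPAIR_ok : evdb.

End F1.
Import F1.

Module F2.

Definition pl n (l : list nat) := map (fun j => nth j l 0) (seq 0 n).
Lemma projs_ok s n l : Forall2 (fun g v => eval g l v) (map PProj (seq s n)) (map (fun j => nth j l 0) (seq s n)).
Proof. revert s; induction n; intros s; simpl; constructor; auto. constructor. Qed.

Fixpoint bsum (F : nat -> nat) N := match N with 0 => 0 | S x => bsum F x + F x end.
Fixpoint bmin (F : nat -> nat) N := match N with 0 => 0 | S x =>
  let r := bmin F x in if r =? x then (if F x =? 0 then S x else x) else r end.

Definition bsumP k Pp := PComp (PPrec PZero (PComp ADD [P 1; Pp])) (map PProj (seq 0 (S k))).
Lemma bsumP_ok k Pp l (F : nat -> nat) :
  (forall i r, eval Pp (i :: r :: map (fun j => nth j l 0) (seq 1 k)) (F i)) ->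
  eval (bsumP k Pp) l (bsum F (nth 0 l 0)).
Proof.
  intros H. unfold bsumP. eapply evc. apply projs_ok. simpl.
  apply (ev_prec_gen _ _ _ (fun x => bsum F x)). constructor. intros x. evt.
Qed.
Definition bminP k Pp := PComp (PPrec PZero
   (PComp ITE [PComp EQN [P 1; P 0]; PComp ITE [Pp; P 0; SUC]; P 1])) (map PProj (seq 0 (S k))).
Lemma bminP_ok k Pp l (F : nat -> nat) :
  (forall i r, eval Pp (i :: r :: map (fun j => nth j l 0) (seq 1 k)) (F i)) ->
  eval (bminP k Pp) l (bmin F (nth 0 l 0)).
Proof.
  intros H. unfold bminP. eapply evc. apply projs_ok. simpl.
  apply (ev_prec_gen _ _ _ (fun x => bmin F x)). constructor. intros x. evt.
  simpl. destruct (bmin F x =? x); simpl; destruct (F x); simpl; auto.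
Qed.

Ltac ev_step2 := first [ solve [ eauto 1 with evdb ]
                      | (eapply bsumP_ok; intros ? ?; eapply ev_val; [ev_step2 | cbn [nth map seq]; reflexivity])
                      | (eapply bminP_ok; intros ? ?; eapply ev_val; [ev_step2 | cbn [nth map seq]; reflexivity])
                      | (eapply evc; [ ev_list2 | ev_step2 ]) ]
with ev_list2 := match goal with
  | |- Forall2 _ [] _ => constructor
  | |- Forall2 _ (_ :: _) _ => eapply Forall2_cons; [ ev_step2 | ev_list2 ]
  end.
Ltac solve_ev2 := first [ ev_step2 | ev_list2 ].
Ltac evt2 := eapply ev_val; [ solve_ev2 | cbn [nth map seq]; try reflexivity ].

Lemma bmin_inv F N : (bmin F N < N /\ F (bmin F N) <> 0 /\ forall i, i < bmin F N -> F i = 0)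
  \/ (bmin F N = N /\ forall i, i < N -> F i = 0).
Proof.
  induction N; simpl. right; split; auto; intros; lia.
  destruct IHN as [[H1 [H2 H3]]|[H1 H2]].
  - left. rewrite (proj2 (Nat.eqb_neq _ _)) by lia. repeat split; auto; lia.
  - rewrite H1, Nat.eqb_refl. destruct (F N) eqn:E; simpl.
    + right. split; auto. intros i hi. destruct (Nat.eq_dec i N); subst; auto. apply H2; lia.
    + left. split; [lia|split]. congruence. intros i hi; apply H2; lia.
Qed.
Lemma bmin_le F N : bmin F N <= N.
Proof. destruct (bmin_inv F N) as [[? _]|[? _]]; lia. Qed.
Lemma bmin_min F N i : i < bmin F N -> F i = 0.
Proof. destruct (bmin_inv F N) as [[_ [_ H]]|[H1 H]]; intros; apply H; lia. Qed.
Lemma bmin_found F N : bmin F N < N -> F (bmin F N) <> 0.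
Proof. destruct (bmin_inv F N) as [[_ [H _]]|[H1 H]]; intros; auto; lia. Qed.
Lemma bmin_eq F N i0 : i0 < N -> F i0 <> 0 -> (forall i, i < i0 -> F i = 0) -> bmin F N = i0.
Proof.
  intros h1 h2 h3. destruct (bmin_inv F N) as [[H1 [H2 H3]]|[H1 H2]].
  - destruct (Nat.lt_trichotomy (bmin F N) i0) as [h|[h|h]]; auto.
    + exfalso; apply H2, h3; auto.
    + exfalso; apply h2, H3; auto.
  - exfalso; apply h2, H2; auto.
Qed.
Lemma bmin_none F N : (forall i, i < N -> F i = 0) -> bmin F N = N.
Proof.
  intros H. destruct (bmin_inv F N) as [[H1 [H2 H3]]|[H1 H2]]; auto. exfalso; apply H2, H; auto.
Qed.
Lemma bmin_ext F G N : (forall i, i < N -> F i = G i) -> bmin F N = bmin G N.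
Proof. induction N; simpl; intros H; auto. rewrite IHN by (intros; apply H; lia). rewrite H by lia. auto. Qed.
Lemma bsum_ext F G N : (forall i, i < N -> F i = G i) -> bsum F N = bsum G N.
Proof. induction N; simpl; intros H; auto. rewrite IHN by (intros; apply H; lia). rewrite H by lia. auto. Qed.

Lemma bsum_pos F N : bsum F N <> 0 <-> exists i, i < N /\ F i <> 0.
Proof.
  induction N; simpl. split; [lia| intros [i [h _]]; lia].
  split.
  - intros H. destruct (F N) eqn:E. rewrite Nat.add_0_r in H. apply IHN in H.
    destruct H as [i [? ?]]; exists i; split; auto; lia. exists N; split; auto; lia.
  - intros [i [h1 h2]]. destruct (Nat.eq_dec i N). subst; lia.
    assert (bsum F N <> 0) by (apply IHN; exists i; split; auto; lia). lia.
Qed.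

Definition divf n m := bmin (fun q => Nat.b2n (n <? S q * m)) (S n).
Definition DIV := PComp (bminP 2 (PComp LTN [P 2; PComp MUL [SUC; P 3]])) [SUC; P 0; P 1].
Lemma DIV_ok l : eval DIV l (divf (nth 0 l 0) (nth 1 l 0)).
Proof.
  unfold DIV. eapply evc. solve_ev. eapply ev_val. apply bminP_ok with (F := fun q => Nat.b2n (nth 0 l 0 <? S q * nth 1 l 0)).
  intros i r. evt. reflexivity.
Qed.
#[export] Hint Resolve DIV_ok : evdb.
Lemma divf_div n m : 0 < m -> divf n m = n / m.
Proof.
  intros Hm. unfold divf. apply bmin_eq.
  - assert (n / m <= n) by (apply Nat.Div0.div_le_upper_bound; nia). lia.
  - destruct (Nat.ltb_spec n (S (n / m) * m)); simpl; auto.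
    pose proof (Nat.div_mod n m ltac:(lia)). pose proof (Nat.mod_upper_bound n m ltac:(lia)). nia.
  - intros i hi. destruct (Nat.ltb_spec n (S i * m)); simpl; auto.
    pose proof (Nat.div_mod n m ltac:(lia)). nia.
Qed.
Definition MOD2 := PComp SUB [P 0; PComp MUL [cst 2; PComp DIV [P 0; cst 2]]].
Lemma MOD2_ok l : eval MOD2 l (nth 0 l 0 mod 2).
Proof. evt. rewrite divf_div by lia. pose proof (Nat.div_mod (nth 0 l 0) 2). lia. Qed.
#[export] Hint Resolve MOD2_ok : evdb.
Definition TB := PComp MOD2 [PComp DIV [P 0; PComp POW2 [P 1]]].
Lemma TB_ok l : eval TB l (Nat.b2n (Nat.testbit (nth 0 l 0) (nth 1 l 0))).
Proof. evt. rewrite divf_div. rewrite Nat.testbit_spec'. auto. apply Nat.neq_0_lt_0, Nat.pow_nonzero; lia. Qed.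
#[export] Hint Resolve TB_ok : evdb.

Definition fst_ n := bmin (fun a => (n / 2 ^ a) mod 2) n.
Definition snd_ n := n / 2 ^ fst_ n / 2.
Definition FST := PComp (bminP 1 (PComp MOD2 [PComp DIV [P 2; PComp POW2 [P 0]]])) [P 0; P 0].
Lemma FST_ok l : eval FST l (fst_ (nth 0 l 0)).
Proof.
  unfold FST. eapply evc. solve_ev. eapply ev_val. apply bminP_ok with (F := fun a => (nth 0 l 0 / 2 ^ a) mod 2).
  intros i r. evt. rewrite divf_div; auto. apply Nat.neq_0_lt_0, Nat.pow_nonzero; lia. reflexivity.
Qed.
#[export] Hint Resolve FST_ok : evdb.
Definition SND := PComp DIV [PComp DIV [P 0; PComp POW2 [FST]]; cst 2].
Lemma SND_ok l : eval SND l (snd_ (nth 0 l 0)).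
Proof.
  evt. unfold snd_. rewrite (divf_div _ 2) by lia. rewrite divf_div; auto.
  apply Nat.neq_0_lt_0, Nat.pow_nonzero; lia.
Qed.
#[export] Hint Resolve SND_ok : evdb.

Lemma pow_gt n : n < 2 ^ n.
Proof. induction n; simpl; lia. Qed.
Lemma npair_pos a b : 0 < npair a b.
Proof. unfold npair. pose proof (Nat.pow_nonzero 2 a). nia. Qed.
Lemma npair_gt1 a b : a < npair a b.
Proof. unfold npair. pose proof (pow_gt a). nia. Qed.
Lemma npair_gt2 a b : b < npair a b.
Proof. unfold npair. pose proof (Nat.pow_nonzero 2 a). nia. Qed.
Lemma npair_div a b i : i <= a -> npair a b / 2 ^ i = 2 ^ (a - i) * (2 * b + 1).
Proof.
  intros h. unfold npair. replace a with ((a - i) + i) at 1 by lia. rewrite Nat.pow_add_r.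
  replace (2 ^ (a - i) * 2 ^ i * (2 * b + 1)) with (2 ^ (a - i) * (2 * b + 1) * 2 ^ i) by ring.
  rewrite Nat.div_mul. auto. apply Nat.pow_nonzero; lia.
Qed.
Lemma fst_npair a b : fst_ (npair a b) = a.
Proof.
  unfold fst_. apply bmin_eq. apply npair_gt1.
  - rewrite npair_div by lia. rewrite Nat.sub_diag, Nat.pow_0_r, Nat.mul_1_l.
    replace (2 * b + 1) with (1 + b * 2) by lia. rewrite Nat.Div0.mod_add. simpl; lia.
  - intros i hi. rewrite npair_div by lia. replace (a - i) with (S (a - i - 1)) by lia.
    rewrite Nat.pow_succ_r'.
    replace (2 * 2 ^ (a - i - 1) * (2 * b + 1)) with ((2 ^ (a - i - 1) * (2 * b + 1)) * 2) by ring.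
    apply Nat.Div0.mod_mul.
Qed.
Lemma snd_npair a b : snd_ (npair a b) = b.
Proof.
  unfold snd_. rewrite fst_npair. rewrite npair_div by lia. rewrite Nat.sub_diag, Nat.pow_0_r, Nat.mul_1_l.
  replace (2 * b + 1) with (1 + b * 2) by lia. rewrite Nat.div_add by lia. auto.
Qed.
Lemma npair_inj a b a' b' : npair a b = npair a' b' -> a = a' /\ b = b'.
Proof.
  intros H. split. rewrite <- (fst_npair a b), <- (fst_npair a' b'), H; auto.
  rewrite <- (snd_npair a b), <- (snd_npair a' b'), H; auto.
Qed.
Lemma npair_surj n : n <> 0 -> exists a b, n = npair a b.
Proof.
  induction n as [n IH] using lt_wf_ind. intros hn.
  destruct (Nat.Even_or_Odd n) as [[m Hm]|[m Hm]].
  - destruct (IH m ltac:(lia) ltac:(lia)) as [a [b Hab]]. exists (S a), b. subst. unfold npair. simpl. lia.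
  - exists 0, m. unfold npair. simpl. lia.
Qed.
Lemma npair_fst_snd n : n <> 0 -> npair (fst_ n) (snd_ n) = n.
Proof. intros h. destruct (npair_surj n h) as [a [b ->]]. rewrite fst_npair, snd_npair; auto. Qed.
Lemma fst0 : fst_ 0 = 0. Proof. reflexivity. Qed.
Lemma snd0 : snd_ 0 = 0. Proof. reflexivity. Qed.
Opaque fst_ snd_.

Fixpoint lc (l : list nat) := match l with [] => 0 | x :: l' => npair x (lc l') end.
Lemma lc_surj n : exists l, lc l = n.
Proof.
  induction n as [n IH] using lt_wf_ind. destruct (Nat.eq_dec n 0). exists []; auto.
  destruct (npair_surj n n0) as [a [b ->]]. destruct (IH b (npair_gt2 a b)) as [l Hl].
  exists (a :: l). simpl; congruence.
Qed.
Lemma lc_inj l l' : lc l = lc l' -> l = l'.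
Proof.
  revert l'; induction l; destruct l'; simpl; intros H; auto.
  pose proof (npair_pos n (lc l')); lia. pose proof (npair_pos a (lc l)); lia.
  apply npair_inj in H. destruct H. f_equal; auto.
Qed.
Definition ITL := prec2 (P 0) (PComp SND [P 1]).
Lemma ITL_ok l : eval ITL l (Nat.iter (nth 0 l 0) snd_ (nth 1 l 0)).
Proof.
  unfold ITL, prec2. eapply evc. solve_ev.
  apply (ev_prec_gen _ _ _ (fun x => Nat.iter x snd_ (nth 1 l 0))). evt. intros x; evt.
Qed.
#[export] Hint Resolve ITL_ok : evdb.
Definition nthl i L := fst_ (Nat.iter i snd_ L).
Definition NTHL := PComp FST [ITL].
Lemma NTHL_ok l : eval NTHL l (nthl (nth 0 l 0) (nth 1 l 0)).
Proof. evt. Qed.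
#[export] Hint Resolve NTHL_ok : evdb.
Definition len L := bmin (fun k => Nat.b2n (Nat.iter k snd_ L =? 0)) (S L).
Definition LEN := PComp (bminP 1 (PComp EQN [PComp ITL [P 0; P 2]; cst 0])) [SUC; P 0].
Lemma LEN_ok l : eval LEN l (len (nth 0 l 0)).
Proof.
  unfold LEN. eapply evc. solve_ev. eapply ev_val.
  apply bminP_ok with (F := fun k => Nat.b2n (Nat.iter k snd_ (nth 0 l 0) =? 0)).
  intros i r. evt. reflexivity.
Qed.
#[export] Hint Resolve LEN_ok : evdb.

Lemma snd_lc l : snd_ (lc l) = lc (tl l).
Proof. destruct l; simpl. apply snd0. apply snd_npair. Qed.
Lemma tl_skipn {A} i (l : list A) : tl (skipn i l) = skipn (S i) l.
Proof. revert l; induction i; intros l; destruct l; simpl; auto. Qed.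
Lemma iter_lc i l : Nat.iter i snd_ (lc l) = lc (skipn i l).
Proof.
  induction i; auto. change (Nat.iter (S i) snd_ (lc l)) with (snd_ (Nat.iter i snd_ (lc l))).
  rewrite IHi, snd_lc, tl_skipn. auto.
Qed.
Lemma nthl_lc i l : nthl i (lc l) = nth i l 0.
Proof.
  unfold nthl. rewrite iter_lc. revert l; induction i; intros l; destruct l; simpl; auto.
  rewrite fst_npair; auto.
Qed.
Lemma len_lc l : len (lc l) = length l.
Proof.
  unfold len. apply bmin_eq.
  - simpl. clear. induction l; simpl; auto. pose proof (npair_gt2 a (lc l)). lia.
  - rewrite iter_lc, skipn_all. simpl. auto.
  - intros i hi. rewrite iter_lc. destruct (skipn i l) eqn:E.
    apply (f_equal (@length nat)) in E. rewrite length_skipn in E. simpl in E. lia.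
    simpl. pose proof (npair_pos n (lc l0)). destruct (Nat.eqb_spec (npair n (lc l0)) 0); simpl; auto. lia.
Qed.

End F2.
Import F2.

Module F3.

Definition ea E := fst_ (snd_ E).
Definition ey E := fst_ (snd_ (snd_ E)).
Definition ew E := snd_ (snd_ (snd_ E)).
Definition EA := PComp FST [SND].
Definition EY := PComp FST [PComp SND [SND]].
Definition EW := PComp SND [PComp SND [SND]].
Lemma EA_ok l : eval EA l (ea (nth 0 l 0)). Proof. evt2. Qed.
Lemma EY_ok l : eval EY l (ey (nth 0 l 0)). Proof. evt2. Qed.
Lemma EW_ok l : eval EW l (ew (nth 0 l 0)). Proof. evt2. Qed.
#[export] Hint Resolve EA_ok EY_ok EW_ok : evdb.

Definition EQ a b := PComp EQN [a; b].
Definition M a b := PComp MUL [a; b].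

Definition has3 J c a y := sg (bsum (fun m => Nat.b2n (fst_ (nthl m J) =? c) * Nat.b2n (ea (nthl m J) =? a)
   * Nat.b2n (ey (nthl m J) =? y)) (len J)).
Definition NE := PComp NTHL [P 0; P 2].
Definition Pp3 :=
  M (M (EQ (PComp FST [NE]) (P 3)) (EQ (PComp EA [NE]) (P 4))) (EQ (PComp EY [NE]) (P 5)).
Definition HAS3 := PComp SG [PComp (bsumP 4 Pp3) [PComp LEN [P 0]; P 0; P 1; P 2; P 3]].
Lemma HAS3_ok l : eval HAS3 l (has3 (nth 0 l 0) (nth 1 l 0) (nth 2 l 0) (nth 3 l 0)).
Proof.
  evt2.
Qed.
#[export] Hint Resolve HAS3_ok : evdb.

Definition hasne J c a := sg (bsum (fun m => Nat.b2n (fst_ (nthl m J) =? c) * Nat.b2n (ea (nthl m J) =? a)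
   * nsg (Nat.b2n (ey (nthl m J) =? 0))) (len J)).
Definition Ppne :=
  M (M (EQ (PComp FST [NE]) (P 3)) (EQ (PComp EA [NE]) (P 4))) (PComp NSG [EQ (PComp EY [NE]) (cst 0)]).
Definition HASNE := PComp SG [PComp (bsumP 3 Ppne) [PComp LEN [P 0]; P 0; P 1; P 2]].
Lemma HASNE_ok l : eval HASNE l (hasne (nth 0 l 0) (nth 1 l 0) (nth 2 l 0)).
Proof.
  evt2.
Qed.
#[export] Hint Resolve HASNE_ok : evdb.

Section J.
Variables E J : nat.
Definition c_ := fst_ E.
Definition t_ := fst_ c_.
Definition pl_ := snd_ c_.
Definition a_ := ea E.
Definition y_ := ey E.
Definition w_ := ew E.
Definition j0 := Nat.b2n (pl_ =? 0) * Nat.b2n (y_ =? 0).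
Definition j1 := Nat.b2n (pl_ =? 0) * sg a_ * Nat.b2n (y_ =? S (fst_ a_)).
Definition j2 := Nat.b2n (y_ =? nthl pl_ a_).
Definition fa3 := Nat.b2n (bsum (fun k => has3 J (nthl k (snd_ pl_)) a_ (nthl k w_)) (len (snd_ pl_)) =? len (snd_ pl_)).
Definition j3 := sg pl_ * Nat.b2n (len w_ =? len (snd_ pl_)) * fa3 * has3 J (fst_ pl_) w_ y_.
Definition j4 := sg pl_ * sg a_ * (if fst_ a_ =? 0 then has3 J (fst_ pl_) (snd_ a_) y_
   else has3 J c_ (npair (pred (fst_ a_)) (snd_ a_)) w_ *
        has3 J (snd_ pl_) (npair (pred (fst_ a_)) (npair w_ (snd_ a_))) y_).
Definition fa5 := Nat.b2n (bsum (fun z => hasne J pl_ (npair z a_)) y_ =? y_).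
Definition j5 := has3 J pl_ (npair y_ a_) 0 * fa5.
Definition just := sg c_ * (Nat.b2n (t_ =? 0) * j0 + (Nat.b2n (t_ =? 1) * j1 + (Nat.b2n (t_ =? 2) * j2 +
   (Nat.b2n (t_ =? 3) * j3 + (Nat.b2n (t_ =? 4) * j4 + Nat.b2n (t_ =? 5) * j5))))).
End J.

Definition cE := PComp FST [P 0].
Definition aE := PComp EA [P 0].
Definition yE := PComp EY [P 0].
Definition wE := PComp EW [P 0].
Definition tE := PComp FST [cE].
Definition plE := PComp SND [cE].
Definition cfE := PComp FST [plE].
Definition clE := PComp SND [plE].
Definition J0 := M (EQ plE (cst 0)) (EQ yE (cst 0)).
Definition J1 := M (M (EQ plE (cst 0)) (PComp SG [aE])) (EQ yE (PComp SUC [PComp FST [aE]])).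
Definition J2 := EQ yE (PComp NTHL [plE; aE]).
Definition Pfa3 := PComp HAS3 [P 2; PComp NTHL [P 0; P 3]; P 4; PComp NTHL [P 0; P 5]].
Definition FA3 := EQ (PComp (bsumP 4 Pfa3) [PComp LEN [clE]; P 1; clE; aE; wE]) (PComp LEN [clE]).
Definition J3 := M (M (M (PComp SG [plE]) (EQ (PComp LEN [wE]) (PComp LEN [clE]))) FA3) (PComp HAS3 [P 1; cfE; wE; yE]).
Definition B0 := PComp HAS3 [P 1; cfE; PComp SND [aE]; yE].
Definition BS := M (PComp HAS3 [P 1; cE; PComp NPAIR [PComp PRED [PComp FST [aE]]; PComp SND [aE]]; wE])
                   (PComp HAS3 [P 1; clE; PComp NPAIR [PComp PRED [PComp FST [aE]]; PComp NPAIR [wE; PComp SND [aE]]]; yE]).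
Definition J4 := M (M (PComp SG [plE]) (PComp SG [aE])) (PComp ITE [PComp FST [aE]; BS; B0]).
Definition Pfa5 := PComp HASNE [P 2; P 3; PComp NPAIR [P 0; P 4]].
Definition FA5 := EQ (PComp (bsumP 3 Pfa5) [yE; P 1; plE; aE]) yE.
Definition J5 := M (PComp HAS3 [P 1; plE; PComp NPAIR [yE; aE]; cst 0]) FA5.
Definition SEL := PComp ADD [M (EQ tE (cst 0)) J0; PComp ADD [M (EQ tE (cst 1)) J1; PComp ADD [M (EQ tE (cst 2)) J2;
   PComp ADD [M (EQ tE (cst 3)) J3; PComp ADD [M (EQ tE (cst 4)) J4; M (EQ tE (cst 5)) J5]]]]].
Definition JUST := M (PComp SG [cE]) SEL.

Lemma FA3_ok l : eval FA3 l (fa3 (nth 0 l 0) (nth 1 l 0)).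
Proof.
  evt2.
Qed.
Lemma FA5_ok l : eval FA5 l (fa5 (nth 0 l 0) (nth 1 l 0)).
Proof.
  evt2.
Qed.
#[export] Hint Resolve FA3_ok FA5_ok : evdb.
Lemma JUST_ok l : eval JUST l (just (nth 0 l 0) (nth 1 l 0)).
Proof.
  unfold JUST, SEL, J0, J1, J2, J3, J4, J5, B0, BS, M, EQ, cE, aE, yE, wE, tE, plE, cfE, clE.
  evt2.
Qed.
#[export] Hint Resolve JUST_ok : evdb.

Definition valid J := Nat.b2n (bsum (fun m => sg (just (nthl m J) J)) (len J) =? len J).
Definition Pv := PComp SG [PComp JUST [PComp NTHL [P 0; P 2]; P 2]].
Definition VALID := EQ (PComp (bsumP 1 Pv) [PComp LEN [P 0]; P 0]) (PComp LEN [P 0]).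
Lemma VALID_ok l : eval VALID l (valid (nth 0 l 0)).
Proof.
  evt2.
Qed.
#[export] Hint Resolve VALID_ok : evdb.

Definition mt J c x m := Nat.b2n (fst_ (nthl m J) =? c) * Nat.b2n (ea (nthl m J) =? npair x 0).
Definition Pm := M (EQ (PComp FST [NE]) (P 3)) (EQ (PComp EA [NE]) (PComp NPAIR [P 4; cst 0])).
Definition vx J c x := valid J * sg (bsum (mt J c x) (len J)).
Definition VX := M (PComp VALID [P 0]) (PComp SG [PComp (bsumP 3 Pm) [PComp LEN [P 0]; P 0; P 1; P 2]]).
Lemma VX_ok l : eval VX l (vx (nth 0 l 0) (nth 1 l 0) (nth 2 l 0)).
Proof.
  evt2.
Qed.
#[export] Hint Resolve VX_ok : evdb.
Definition findm J c x := bmin (mt J c x) (len J).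
Definition FINDM := PComp (bminP 3 Pm) [PComp LEN [P 0]; P 0; P 1; P 2].
Lemma FINDM_ok l : eval FINDM l (findm (nth 0 l 0) (nth 1 l 0) (nth 2 l 0)).
Proof.
  evt2.
Qed.
#[export] Hint Resolve FINDM_ok : evdb.
Definition BODY := PComp NSG [VX].
Definition OUT := PComp EY [PComp NTHL [FINDM; P 0]].
Definition UNIV := PComp OUT [PComp (PMu BODY) [P 0; P 1]; P 0; P 1].

End F3.
Import F3.

Module F4.

Lemma ne_mul a b : a * b <> 0 <-> a <> 0 /\ b <> 0.
Proof. rewrite Nat.mul_eq_0. tauto. Qed.
Lemma ne_b2n x y : Nat.b2n (x =? y) <> 0 <-> x = y.
Proof. destruct (Nat.eqb_spec x y); simpl; split; auto; congruence. Qed.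
Lemma ne_sg x : sg x <> 0 <-> x <> 0.
Proof. destruct x; simpl; split; auto; congruence. Qed.
Lemma ne_nsg x : nsg x <> 0 <-> x = 0.
Proof. destruct x; simpl; split; auto; congruence. Qed.
Lemma sg_le x : sg x <= 1. Proof. destruct x; simpl; lia. Qed.
Lemma bsum_le F n : (forall k, F k <= 1) -> bsum F n <= n.
Proof. intros H; induction n; simpl; auto. specialize (H n); lia. Qed.
Lemma ne_all F n : (forall k, F k <= 1) -> Nat.b2n (bsum F n =? n) <> 0 <-> forall k, k < n -> F k <> 0.
Proof.
  intros H. rewrite ne_b2n. induction n; simpl. split; auto; intros; lia.
  split.
  - intros E k hk. pose proof (bsum_le F n H). pose proof (H n).
    assert (bsum F n = n) by lia. destruct (Nat.eq_dec k n). subst; lia. apply IHn; auto; lia.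
  - intros A. rewrite (proj2 IHn) by (intros; apply A; lia). specialize (A n ltac:(lia)). specialize (H n). lia.
Qed.

Lemma nthl_In m Js : m < length Js -> In (nthl m (lc Js)) Js.
Proof. intros; rewrite nthl_lc. apply nth_In; auto. Qed.

Definition H3 Js c a y := exists E, In E Js /\ fst_ E = c /\ ea E = a /\ ey E = y.
Definition HNE Js c a := exists E, In E Js /\ fst_ E = c /\ ea E = a /\ ey E <> 0.

Lemma has3_spec Js c a y : has3 (lc Js) c a y <> 0 <-> H3 Js c a y.
Proof.
  unfold has3, H3. rewrite ne_sg, bsum_pos, len_lc. split.
  - intros [m [hm H]]. rewrite !ne_mul, !ne_b2n in H. destruct H as [[? ?] ?].
    exists (nthl m (lc Js)). split; auto. apply nthl_In; auto.
  - intros [E [HI [h1 [h2 h3]]]]. destruct (In_nth _ _ 0 HI) as [m [hm hE]].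
    exists m. split; auto. rewrite nthl_lc, hE, !ne_mul, !ne_b2n. auto.
Qed.
Lemma hasne_spec Js c a : hasne (lc Js) c a <> 0 <-> HNE Js c a.
Proof.
  unfold hasne, HNE. rewrite ne_sg, bsum_pos, len_lc. split.
  - intros [m [hm H]]. rewrite !ne_mul, !ne_b2n, ne_nsg in H. destruct H as [[? ?] ?].
    exists (nthl m (lc Js)). split. apply nthl_In; auto. repeat split; auto.
    destruct (Nat.eqb_spec (ey (nthl m (lc Js))) 0); simpl in *; auto; congruence.
  - intros [E [HI [h1 [h2 h3]]]]. destruct (In_nth _ _ 0 HI) as [m [hm hE]].
    exists m. split; auto. rewrite nthl_lc, hE, !ne_mul, !ne_b2n, ne_nsg. repeat split; auto.
    destruct (Nat.eqb_spec (ey E) 0); simpl; auto; congruence.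
Qed.
Lemma has3_le J c a y : has3 J c a y <= 1. Proof. apply sg_le. Qed.
Lemma hasne_le J c a : hasne J c a <= 1. Proof. apply sg_le. Qed.

Definition JustP Js E :=
  let c := fst_ E in let t := fst_ c in let pl := snd_ c in
  let a := ea E in let y := ey E in let w := ew E in
  c <> 0 /\
 ( (t = 0 /\ pl = 0 /\ y = 0)
 \/ (t = 1 /\ pl = 0 /\ a <> 0 /\ y = S (fst_ a))
 \/ (t = 2 /\ y = nthl pl a)
 \/ (t = 3 /\ pl <> 0 /\ len w = len (snd_ pl) /\
       (forall k, k < len (snd_ pl) -> H3 Js (nthl k (snd_ pl)) a (nthl k w)) /\ H3 Js (fst_ pl) w y)
 \/ (t = 4 /\ pl <> 0 /\ a <> 0 /\ (fst_ a = 0 -> H3 Js (fst_ pl) (snd_ a) y) /\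
       (fst_ a <> 0 -> H3 Js c (npair (pred (fst_ a)) (snd_ a)) w /\
                       H3 Js (snd_ pl) (npair (pred (fst_ a)) (npair w (snd_ a))) y))
 \/ (t = 5 /\ H3 Js pl (npair y a) 0 /\ (forall z, z < y -> HNE Js pl (npair z a)))).

Lemma just_spec Js E : just E (lc Js) <> 0 <-> JustP Js E.
Proof.
  unfold just, JustP, j0, j1, j2, j3, j4, j5, fa3, fa5, t_, pl_, c_, a_, y_, w_.
  rewrite ne_mul, ne_sg.
  apply and_iff_compat_l.
  destruct (fst_ (fst_ E)) as [|[|[|[|[|[|t]]]]]] eqn:Et; simpl Nat.b2n; simpl Nat.eqb;
    rewrite ?Nat.mul_0_l, ?Nat.mul_1_l, ?Nat.add_0_l, ?Nat.add_0_r.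
  - rewrite ne_mul, !ne_b2n. split. intros; left; tauto. intros [H|[H|[H|[H|[H|H]]]]]; try tauto; lia.
  - rewrite !ne_mul, !ne_b2n, ne_sg. split. intros; right; left; tauto.
    intros [H|[H|[H|[H|[H|H]]]]]; try tauto; lia.
  - rewrite !ne_b2n. split. intros; right; right; left; tauto.
    intros [H|[H|[H|[H|[H|H]]]]]; try tauto; lia.
  - rewrite !ne_mul. rewrite ne_all by (intros; apply has3_le).
    rewrite !ne_b2n, ne_sg, has3_spec.
    setoid_rewrite has3_spec.
    split. intros; right; right; right; left; tauto.
    intros [H|[H|[H|[H|[H|H]]]]]; try tauto; lia.
  - rewrite !ne_mul, !ne_sg.
    split.
    + intros [[H1 H2] H3']. right; right; right; right; left.
      split; [reflexivity|]. split; [exact H1|]. split; [exact H2|]. split.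
      * intros h. rewrite h in H3'. simpl in H3'. apply has3_spec; auto.
      * intros h. destruct (Nat.eqb_spec (fst_ (ea E)) 0); try contradiction.
        rewrite ne_mul, !has3_spec in H3'. tauto.
    + intros [H|[H|[H|[H|[H|H]]]]]; try lia.
      destruct H as [_ [H1 [H2 [H3' H4]]]]. split; [split; auto|].
      destruct (Nat.eqb_spec (fst_ (ea E)) 0).
      * apply has3_spec; auto.
      * rewrite ne_mul, !has3_spec. apply H4; auto.
  - rewrite !ne_mul. rewrite ne_all by (intros; apply hasne_le).
    rewrite has3_spec.
    setoid_rewrite hasne_spec.
    split. intros; right; right; right; right; right; tauto.
    intros [H|[H|[H|[H|[H|H]]]]]; try tauto; lia.
  - split. intros H; lia. intros [H|[H|[H|[H|[H|H]]]]]; lia.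
Qed.

Definition ValidP Js := forall E, In E Js -> JustP Js E.
Lemma valid_spec Js : valid (lc Js) <> 0 <-> ValidP Js.
Proof.
  unfold valid, ValidP. rewrite ne_all by (intros; apply sg_le). rewrite len_lc.
  split.
  - intros H E HI. destruct (In_nth _ _ 0 HI) as [m [hm hE]]. specialize (H m hm).
    rewrite ne_sg, nthl_lc, hE, just_spec in H. auto.
  - intros H m hm. rewrite ne_sg, nthl_lc, just_spec. apply H. apply nth_In; auto.
Qed.

Lemma code_comp f gs : code (PComp f gs) = npair 3 (npair (code f) (lc (map code gs))).
Proof. simpl. f_equal. f_equal. try (induction gs; simpl; auto; f_equal; auto). Qed.
Lemma code_zero : code PZero = npair 0 0. Proof. reflexivity. Qed.
Lemma code_succ : code PSucc = npair 1 0. Proof. reflexivity. Qed.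
Lemma code_proj i : code (PProj i) = npair 2 i. Proof. reflexivity. Qed.
Lemma code_prec f g : code (PPrec f g) = npair 4 (npair (code f) (code g)). Proof. reflexivity. Qed.
Lemma code_mu f : code (PMu f) = npair 5 (code f). Proof. reflexivity. Qed.
Opaque npair.

Section ProgInd.
Variable Q : prog -> Prop.
Hypotheses (Q0 : Q PZero) (Q1 : Q PSucc) (Q2 : forall i, Q (PProj i))
  (Q3 : forall f gs, Q f -> Forall Q gs -> Q (PComp f gs))
  (Q4 : forall f g, Q f -> Q g -> Q (PPrec f g)) (Q5 : forall f, Q f -> Q (PMu f)).
Fixpoint prog_ind2 p : Q p :=
  match p with
  | PZero => Q0 | PSucc => Q1 | PProj i => Q2 i
  | PComp f gs => Q3 f gs (prog_ind2 f)
      ((fix F l : Forall Q l := match l with [] => Forall_nil _ | g :: l' => Forall_cons g (prog_ind2 g) (F l') end) gs)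
  | PPrec f g => Q4 f g (prog_ind2 f) (prog_ind2 g)
  | PMu f => Q5 f (prog_ind2 f)
  end.
End ProgInd.

Lemma lc_app_mono x l : In x l -> x < lc l.
Proof.
  induction l; simpl; intros H. contradiction. destruct H. subst. apply npair_gt1.
  pose proof (npair_gt2 a (lc l)). specialize (IHl H). lia.
Qed.

Lemma code_inj : forall p q, code p = code q -> p = q.
Proof.
  intros p. induction p using prog_ind2; intros q Hq; destruct q;
  rewrite ?code_comp, ?code_zero, ?code_succ, ?code_proj, ?code_prec, ?code_mu in *;
  apply npair_inj in Hq; destruct Hq as [Ht Hp]; try discriminate; auto.
  - apply npair_inj in Hp. destruct Hp as [Hf Hl]. apply lc_inj in Hl. f_equal. auto.
    clear - H Hl. revert l Hl. induction H; intros l' Hl; destruct l'; simpl in Hl; try discriminate; auto.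
    injection Hl; intros. f_equal; auto.
  - apply npair_inj in Hp. destruct Hp. f_equal; auto.
  - f_equal; auto.
Qed.

Definition mkE c a y w := npair c (npair a (npair y w)).
Lemma mkE_c c a y w : fst_ (mkE c a y w) = c. Proof. unfold mkE. apply fst_npair. Qed.
Lemma mkE_a c a y w : ea (mkE c a y w) = a. Proof. unfold mkE, ea. rewrite snd_npair, fst_npair; auto. Qed.
Lemma mkE_y c a y w : ey (mkE c a y w) = y. Proof. unfold mkE, ey. rewrite !snd_npair, fst_npair; auto. Qed.
Lemma mkE_w c a y w : ew (mkE c a y w) = w. Proof. unfold mkE, ew. rewrite !snd_npair; auto. Qed.

Lemma lc_nonzero l : lc l <> 0 -> exists x r, l = x :: r.
Proof. destruct l; simpl. intros H; contradiction. eauto. Qed.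

Lemma Forall2_nth_intro {A B} (R : A -> B -> Prop) (l1 : list A) (l2 : list B) d1 d2 :
  length l1 = length l2 -> (forall k, k < length l1 -> R (nth k l1 d1) (nth k l2 d2)) -> Forall2 R l1 l2.
Proof.
  revert l2; induction l1; intros l2 Hl H; destruct l2; simpl in *; try discriminate; constructor.
  apply (H 0); lia. apply IHl1; auto. intros k hk. apply (H (S k)); lia.
Qed.

Lemma sound Js : ValidP Js -> forall p E, In E Js -> code p = fst_ E ->
  forall la, lc la = ea E -> eval p la (ey E).
Proof.
  intros HV p. induction p using prog_ind2.
  - intros E HI Hc la Ha. pose proof (HV E HI) as HJ; unfold JustP in HJ; cbv zeta in HJ; destruct HJ as [_ HJ].
    rewrite <- Hc, code_zero, fst_npair, snd_npair in HJ.
    destruct HJ as [H|[H|[H|[H|[H|H]]]]]; try lia. destruct H as [_ [_ ->]]. constructor.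
  - intros E HI Hc la Ha. pose proof (HV E HI) as HJ; unfold JustP in HJ; cbv zeta in HJ; destruct HJ as [_ HJ].
    rewrite <- Hc, code_succ, fst_npair, snd_npair, <- Ha in HJ.
    destruct HJ as [H|[H|[H|[H|[H|H]]]]]; try lia. destruct H as [_ [_ [H1 ->]]].
    destruct (lc_nonzero la H1) as [x [r ->]]. simpl. rewrite fst_npair. constructor.
  - intros E HI Hc la Ha. pose proof (HV E HI) as HJ; unfold JustP in HJ; cbv zeta in HJ; destruct HJ as [_ HJ].
    rewrite <- Hc, code_proj, fst_npair, snd_npair, <- Ha in HJ.
    destruct HJ as [H|[H|[H|[H|[H|H]]]]]; try lia. destruct H as [_ ->]. rewrite nthl_lc. constructor.
  - intros E HI Hc la Ha. pose proof (HV E HI) as HJ; unfold JustP in HJ; cbv zeta in HJ; destruct HJ as [_ HJ].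
    rewrite <- Hc, code_comp, fst_npair, snd_npair, <- Ha, fst_npair, snd_npair in HJ.
    destruct HJ as [H0|[H0|[H0|[H0|[H0|H0]]]]]; try lia.
    destruct H0 as [_ [_ [Hlen [Hall [Ef [HIf [Hcf [Haf Hyf]]]]]]]].
    destruct (lc_surj (ew E)) as [lw Hlw]. rewrite <- Hlw in *.
    rewrite !len_lc, length_map in Hlen.
    eapply (ev_comp _ _ _ lw).
    + apply Forall2_nth_intro with (d1 := PZero) (d2 := 0). auto.
      intros k hk. rewrite len_lc, length_map in Hall. destruct (Hall k hk) as [Ek [HIk [Hck [Hak Hyk]]]].
      rewrite nthl_lc in Hck, Hyk. rewrite <- Hyk.
      rewrite Forall_forall in H. apply (H (nth k gs PZero)). apply nth_In; auto.
      auto. rewrite Hck. rewrite (nth_indep _ _ (code PZero)) by (rewrite length_map; auto).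
      rewrite map_nth. auto. auto.
    + rewrite <- Hyf. apply (IHp Ef); auto.
  - assert (forall x E, In E Js -> code (PPrec p1 p2) = fst_ E -> forall rest, lc (x :: rest) = ea E ->
             eval (PPrec p1 p2) (x :: rest) (ey E)) as KEY.
    { induction x; intros E HI Hc rest Ha; pose proof (HV E HI) as HJ; unfold JustP in HJ; cbv zeta in HJ;
      destruct HJ as [_ HJ]; rewrite <- Hc, code_prec, fst_npair, snd_npair, <- Ha in HJ; simpl lc in HJ;
      rewrite ?fst_npair, ?snd_npair in HJ;
      destruct HJ as [H|[H|[H|[H|[H|H]]]]]; try lia; destruct H as [_ [_ [_ [H0 H1]]]].
      - constructor. specialize (H0 eq_refl). destruct H0 as [Ef [HIf [Hcf [Haf Hyf]]]].
        rewrite <- Hyf. apply (IHp1 Ef); auto.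
      - destruct (H1 ltac:(lia)) as [[E1 [HI1 [Hc1 [Ha1 Hy1]]]] [E2 [HI2 [Hc2 [Ha2 Hy2]]]]].
        simpl pred in *. econstructor.
        + apply (IHx E1); auto; congruence.
        + rewrite <- Hy2, Hy1. apply (IHp2 E2); auto; try congruence. }
    intros E HI Hc la Ha. pose proof (HV E HI) as HJ; unfold JustP in HJ; cbv zeta in HJ; destruct HJ as [_ HJ].
    rewrite <- Hc, code_prec, fst_npair, snd_npair in HJ.
    destruct HJ as [H|[H|[H|[H|[H|H]]]]]; try lia. destruct H as [_ [_ [H1 _]]].
    rewrite <- Ha in H1. destruct (lc_nonzero la H1) as [x [r ->]]. apply (KEY x E); auto.
  - intros E HI Hc la Ha. pose proof (HV E HI) as HJ; unfold JustP in HJ; cbv zeta in HJ; destruct HJ as [_ HJ].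
    rewrite <- Hc, code_mu, fst_npair, snd_npair, <- Ha in HJ.
    destruct HJ as [H|[H|[H|[H|[H|H]]]]]; try lia. destruct H as [_ [[Ef [HIf [Hcf [Haf Hyf]]]] Hall]].
    constructor.
    + rewrite <- Hyf. apply (IHp Ef); auto.
    + intros z hz. destruct (Hall z hz) as [Ez [HIz [Hcz [Haz Hyz]]]]. exists (ey Ez). split; auto.
      
Qed.

Lemma H3_mono Js Js' c a y : incl Js Js' -> H3 Js c a y -> H3 Js' c a y.
Proof. intros Hi [E [HI H]]. exists E; split; auto. Qed.
Lemma HNE_mono Js Js' c a : incl Js Js' -> HNE Js c a -> HNE Js' c a.
Proof. intros Hi [E [HI H]]. exists E; split; auto. Qed.
Lemma JustP_mono Js Js' E : incl Js Js' -> JustP Js E -> JustP Js' E.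
Proof.
  intros Hi. unfold JustP; cbv zeta. intros [Hc HJ]. split; auto.
  destruct HJ as [H|[H|[H|[H|[H|H]]]]].
  - left; auto.
  - right; left; auto.
  - right; right; left; auto.
  - right; right; right; left. destruct H as [A [B [C [D F]]]].
    refine (conj A (conj B (conj C (conj _ _)))).
    intros k hk; apply (H3_mono Js); auto. apply (H3_mono Js); auto.
  - right; right; right; right; left. destruct H as [A [B [C [D F]]]].
    refine (conj A (conj B (conj C (conj _ _)))).
    intros h; apply (H3_mono Js); auto.
    intros h; split; apply (H3_mono Js); auto; apply F; auto.
  - right; right; right; right; right. destruct H as [A [B C]].
    refine (conj A (conj _ _)).
    apply (H3_mono Js); auto. intros z hz; apply (HNE_mono Js); auto.
Qed.
Lemma ValidP_app A B : ValidP A -> ValidP B -> ValidP (A ++ B).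
Proof.
  intros HA HB E HI. apply in_app_or in HI. destruct HI as [HI|HI].
  apply (JustP_mono A); auto. intros x hx; apply in_or_app; auto.
  apply (JustP_mono B); auto. intros x hx; apply in_or_app; auto.
Qed.
Lemma ValidP_cons E A : JustP (E :: A) E -> ValidP A -> ValidP (E :: A).
Proof.
  intros H HA E' [->|HI]; auto. apply (JustP_mono A); auto. intros x hx; right; auto.
Qed.
Lemma In_H3 Js c a y w : In (mkE c a y w) Js -> H3 Js c a y.
Proof. intros H. exists (mkE c a y w). rewrite mkE_c, mkE_a, mkE_y. auto. Qed.

Lemma gather_comp args gs ys :
  Forall2 (fun g v => eval g args v /\ exists Js w, ValidP Js /\ In (mkE (code g) (lc args) v w) Js) gs ys ->
  exists Jg, ValidP Jg /\ forall k, k < length gs -> H3 Jg (code (nth k gs PZero)) (lc args) (nth k ys 0).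
Proof.
  induction 1. exists []. split. intros E HI; destruct HI. intros k hk; simpl in hk; lia.
  destruct H as [_ [J1 [w1 [HV1 HI1]]]]. destruct IHForall2 as [Jg [HVg Hg]].
  exists (J1 ++ Jg). split. apply ValidP_app; auto.
  intros [|k] hk; simpl.
  - apply (H3_mono J1). intros z hz; apply in_or_app; auto. eapply In_H3; eauto.
  - apply (H3_mono Jg). intros z hz; apply in_or_app; auto. apply Hg. simpl in hk; lia.
Qed.
Lemma gather_mu cf a y :
  (forall z, z < y -> exists Js, ValidP Js /\ HNE Js cf (npair z a)) ->
  exists Js, ValidP Js /\ forall z, z < y -> HNE Js cf (npair z a).
Proof.
  induction y; intros H. exists []. split. intros E HI; destruct HI. intros; lia.
  destruct IHy as [J1 [HV1 H1]]. intros z hz; apply H; lia.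
  destruct (H y ltac:(lia)) as [J2 [HV2 H2]]. exists (J1 ++ J2). split. apply ValidP_app; auto.
  intros z hz. destruct (Nat.eq_dec z y). subst. apply (HNE_mono J2); auto. intros q hq; apply in_or_app; auto.
  apply (HNE_mono J1); auto. intros q hq; apply in_or_app; auto. apply H1; lia.
Qed.

Ltac justE := unfold JustP; cbv zeta; rewrite ?mkE_c, ?mkE_a, ?mkE_y, ?mkE_w.

Lemma complete : forall p la y, eval p la y ->
  exists Js w, ValidP Js /\ In (mkE (code p) (lc la) y w) Js.
Proof.
  apply (eval_ind2 (fun p la y => exists Js w, ValidP Js /\ In (mkE (code p) (lc la) y w) Js)).
  - intros args. exists [mkE (code PZero) (lc args) 0 0], 0. split; [|left; auto].
    apply ValidP_cons; [|intros E []]. justE. rewrite code_zero, fst_npair, snd_npair.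
    split. pose proof (npair_pos 0 0); lia. left; auto.
  - intros x args. exists [mkE (code PSucc) (lc (x :: args)) (S x) 0], 0. split; [|left; auto].
    apply ValidP_cons; [|intros E []]. justE. rewrite code_succ, fst_npair, snd_npair.
    split. pose proof (npair_pos 1 0); lia. right; left. simpl lc. rewrite fst_npair.
    repeat split; auto. pose proof (npair_pos x (lc args)); lia.
  - intros i args. exists [mkE (code (PProj i)) (lc args) (nth i args 0) 0], 0. split; [|left; auto].
    apply ValidP_cons; [|intros E []]. justE. rewrite code_proj, fst_npair, snd_npair.
    split. pose proof (npair_pos 2 i); lia. right; right; left. rewrite nthl_lc. auto.
  - intros f gs args ys y HF Hf [Jf [wf [HVf HIf]]].
    pose proof (Forall2_length HF) as Hlen.
    destruct (gather_comp _ _ _ HF) as [Jg [HVg Hg]].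
    set (E := mkE (code (PComp f gs)) (lc args) y (lc ys)).
    exists (E :: Jf ++ Jg), (lc ys). split; [|left; auto].
    apply ValidP_cons; [|apply ValidP_app; auto]. unfold E. justE.
    rewrite code_comp, !fst_npair, !snd_npair. split. pose proof (npair_pos 3 (npair (code f) (lc (map code gs)))); lia.
    right; right; right; left. split; auto. split. pose proof (npair_pos (code f) (lc (map code gs))); lia.
    rewrite !len_lc, length_map. split; auto. split.
    + intros k hk. rewrite nthl_lc, nthl_lc. rewrite ?fst_npair, ?snd_npair; apply (H3_mono Jg). intros q hq; right; apply in_or_app; auto.
      rewrite (nth_indep _ _ (code PZero)) by (rewrite length_map; auto). rewrite map_nth. apply Hg; auto.
    + rewrite ?fst_npair. rewrite ?fst_npair, ?snd_npair; apply (H3_mono Jf). intros q hq; right; apply in_or_app; auto. eapply In_H3; eauto.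
  - intros f g args y Hf [J1 [w1 [HV1 HI1]]].
    set (E := mkE (code (PPrec f g)) (lc (0 :: args)) y 0).
    exists (E :: J1), 0. split; [|left; auto].
    apply ValidP_cons; auto. unfold E. justE. simpl lc.
    rewrite code_prec, !fst_npair, !snd_npair. split. pose proof (npair_pos 4 (npair (code f) (code g))); lia.
    right; right; right; right; left. split; auto. split. pose proof (npair_pos (code f) (code g)); lia.
    split. pose proof (npair_pos 0 (lc args)); lia. split.
    + intros _. rewrite ?fst_npair, ?snd_npair; apply (H3_mono J1). intros q hq; right; auto. eapply In_H3; eauto.
    + intros h; lia.
  - intros f g x args r y H1 [J1 [w1 [HV1 HI1]]] H2 [J2 [w2 [HV2 HI2]]].
    set (E := mkE (code (PPrec f g)) (lc (S x :: args)) y r).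
    exists (E :: J1 ++ J2), r. split; [|left; auto].
    apply ValidP_cons; [|apply ValidP_app; auto]. unfold E. justE. simpl lc.
    rewrite code_prec, !fst_npair, !snd_npair. split. pose proof (npair_pos 4 (npair (code f) (code g))); lia.
    right; right; right; right; left. split; auto. split. pose proof (npair_pos (code f) (code g)); lia.
    split. pose proof (npair_pos (S x) (lc args)); lia. split.
    + intros h; lia.
    + intros _. simpl pred. split.
      * rewrite ?fst_npair, ?snd_npair; apply (H3_mono J1). intros q hq; right; apply in_or_app; auto.
        rewrite <- code_prec. eapply In_H3; eauto.
      * rewrite ?fst_npair, ?snd_npair; apply (H3_mono J2). intros q hq; right; apply in_or_app; auto. eapply In_H3; eauto.
  - intros f args y H0 [J0 [w0 [HV0 HI0]]] Hlt.
    destruct (gather_mu (code f) (lc args) y) as [Jm [HVm Hm]].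
    { intros z hz. destruct (Hlt z hz) as [v [hv [_ [Jz [wz [HVz HIz]]]]]].
      exists Jz. split; auto. exists (mkE (code f) (lc (z :: args)) v wz). rewrite mkE_c, mkE_a, mkE_y. auto. }
    set (E := mkE (code (PMu f)) (lc args) y 0).
    exists (E :: J0 ++ Jm), 0. split; [|left; auto].
    apply ValidP_cons; [|apply ValidP_app; auto]. unfold E. justE.
    rewrite code_mu, !fst_npair, !snd_npair. split. pose proof (npair_pos 5 (code f)); lia.
    right; right; right; right; right. split; auto. split.
    + rewrite ?fst_npair, ?snd_npair; apply (H3_mono J0). intros q hq; right; apply in_or_app; auto. eapply In_H3; eauto.
    + intros z hz. rewrite ?fst_npair, ?snd_npair; apply (HNE_mono Jm). intros q hq; right; apply in_or_app; auto. apply Hm; auto.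
Qed.

End F4.
Import F4.

Module F5.

Lemma BODY_ok l : eval BODY l (nsg (vx (nth 0 l 0) (nth 1 l 0) (nth 2 l 0))).
Proof. unfold BODY. evt2. Qed.
Lemma OUT_ok l : eval OUT l (ey (nthl (findm (nth 0 l 0) (nth 1 l 0) (nth 2 l 0)) (nth 0 l 0))).
Proof. unfold OUT. evt2. Qed.

Lemma inv_comp f gs l y : eval (PComp f gs) l y -> exists ys, Forall2 (fun g v => eval g l v) gs ys /\ eval f ys y.
Proof. intros H; inversion H; subst; eauto. Qed.
Lemma inv_mu f l y : eval (PMu f) l y -> eval f (y :: l) 0 /\ forall z, z < y -> exists v, v <> 0 /\ eval f (z :: l) v.
Proof. intros H; inversion H; subst; auto. Qed.
Lemma inv_F2_cons {A B} (R : A -> B -> Prop) a l ys : Forall2 R (a :: l) ys -> exists v ys', ys = v :: ys' /\ R a v /\ Forall2 R l ys'.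
Proof. intros H; inversion H; subst; eauto. Qed.
Lemma inv_F2_nil {A B} (R : A -> B -> Prop) ys : Forall2 R [] ys -> ys = [].
Proof. intros H; inversion H; auto. Qed.
Lemma inv_F2_1 (R : prog -> nat -> Prop) a ys : Forall2 R [a] ys -> exists v, ys = [v] /\ R a v.
Proof.
  intros H. apply inv_F2_cons in H as [v [y1 [-> [H1 H]]]]. apply inv_F2_nil in H. subst. eauto.
Qed.
Lemma inv_F2_2 (R : prog -> nat -> Prop) a b ys : Forall2 R [a; b] ys -> exists v w, ys = [v; w] /\ R a v /\ R b w.
Proof.
  intros H. apply inv_F2_cons in H as [v [y1 [-> [H1 H]]]]. apply inv_F2_cons in H as [w [y2 [-> [H2 H]]]].
  apply inv_F2_nil in H. subst. eauto.
Qed.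
Lemma inv_F2_3 (R : prog -> nat -> Prop) a b c ys : Forall2 R [a; b; c] ys ->
  exists v w u, ys = [v; w; u] /\ R a v /\ R b w /\ R c u.
Proof.
  intros H. apply inv_F2_cons in H as [v [y1 [-> [H1 H]]]]. apply inv_F2_cons in H as [w [y2 [-> [H2 H]]]].
  apply inv_F2_cons in H as [u [y3 [-> [H3 H]]]]. apply inv_F2_nil in H. subst. eauto 10.
Qed.
Lemma det_ok P (F : list nat -> nat) l v : (forall l, eval P l (F l)) -> eval P l v -> v = F l.
Proof. intros H1 H2. eapply eval_det; eauto. Qed.

Lemma least_ex (Q : nat -> Prop) : (forall n, Q n \/ ~ Q n) -> (exists n, Q n) -> exists n, Q n /\ forall m, m < n -> ~ Q m.
Proof.
  intros D [n Hn]. revert Hn. induction n as [n IH] using lt_wf_ind. intros Hn.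
  assert (A : (exists m, m < n /\ Q m) \/ forall m, m < n -> ~ Q m).
  { clear IH Hn. induction n. right; intros; lia.
    destruct IHn as [[m [h1 h2]]|H]. left; exists m; split; auto; lia.
    destruct (D n). left; exists n; split; auto. right; intros m hm. destruct (Nat.eq_dec m n); subst; auto. apply H; lia. }
  destruct A as [[m [h1 h2]]|A]. apply (IH m); auto. exists n; auto.
Qed.

Lemma vx_spec Js c x : vx (lc Js) c x <> 0 <-> ValidP Js /\ exists E, In E Js /\ fst_ E = c /\ ea E = npair x 0.
Proof.
  unfold vx. rewrite ne_mul, valid_spec, ne_sg, bsum_pos, len_lc. apply and_iff_compat_l. split.
  - intros [m [hm H]]. unfold mt in H. rewrite ne_mul, !ne_b2n in H. exists (nthl m (lc Js)).
    split; [apply nthl_In; auto | tauto].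
  - intros [E [HI [h1 h2]]]. destruct (In_nth _ _ 0 HI) as [m [hm hE]]. exists m. split; auto.
    unfold mt. rewrite nthl_lc, hE, ne_mul, !ne_b2n. auto.
Qed.

Lemma findm_ok J c x : vx J c x <> 0 -> findm J c x < len J /\ mt J c x (findm J c x) <> 0.
Proof.
  intros H. unfold vx in H. rewrite ne_mul, ne_sg, bsum_pos in H. destruct H as [_ [m [hm H]]].
  unfold findm. destruct (bmin_inv (mt J c x) (len J)) as [[A [B C]]|[A B]]. auto.
  exfalso. apply H, B; auto.
Qed.

Lemma phi_det c x y y' : phi c x y -> phi c x y' -> y = y'.
Proof.
  intros [p [Hp H]] [q [Hq H']]. rewrite <- Hq in Hp. apply code_inj in Hp. subst. eapply eval_det; eauto.
Qed.

Lemma vx_val J c x p : vx J c x <> 0 -> code p = c -> eval p [x] (ey (nthl (findm J c x) J)).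
Proof.
  intros H Hc. destruct (lc_surj J) as [Js <-]. destruct (findm_ok _ _ _ H) as [h1 h2].
  apply vx_spec in H. destruct H as [HV _]. rewrite len_lc in h1.
  unfold mt in h2. rewrite ne_mul, !ne_b2n in h2. destruct h2 as [h2 h3].
  apply (sound Js HV p). apply nthl_In; auto. congruence. rewrite h3. reflexivity.
Qed.

Lemma U_complete c x y rest : phi c x y -> eval UNIV (c :: x :: rest) y.
Proof.
  intros Hphi. destruct Hphi as [p [Hc Hev]].
  destruct (complete _ _ _ Hev) as [Js [w [HV HI]]].
  destruct (least_ex (fun J => vx J c x <> 0)) as [J0 [HJ0 Hmin]].
  { intros n. destruct (Nat.eq_dec (vx n c x) 0); auto. }
  { exists (lc Js). apply vx_spec. split; auto. exists (mkE (code p) (lc [x]) y w).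
    rewrite mkE_c, mkE_a. auto. }
  unfold UNIV. eapply evc.
  - constructor; [|constructor; [|constructor; [|constructor]]].
    + eapply evc. solve_ev2. simpl. apply (ev_mu_gen _ _ (fun z => nsg (vx z c x)) J0).
      * intros z _. eapply ev_val. apply BODY_ok. reflexivity.
      * destruct (vx J0 c x); simpl; auto; congruence.
      * intros z hz. specialize (Hmin z hz). destruct (vx z c x); simpl; auto.
    + constructor.
    + constructor.
  - eapply ev_val. apply OUT_ok. simpl.
    pose proof (vx_val _ _ _ p HJ0 Hc). eapply eval_det; eauto.
Qed.

Lemma U_sound c x y rest : (exists p, code p = c) -> eval UNIV (c :: x :: rest) y -> phi c x y.
Proof.
  intros [p Hc] H. unfold UNIV in H. apply inv_comp in H. destruct H as [ys [HF HO]].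
  apply inv_F2_3 in HF. destruct HF as [J [v [u [-> [HJ [Hv Hu]]]]]].
  apply (det_ok _ _ _ _ (P_ok 0)) in Hv. apply (det_ok _ _ _ _ (P_ok 1)) in Hu. simpl in Hv, Hu. subst v u.
  apply inv_comp in HJ. destruct HJ as [ys [HF HM]]. apply inv_F2_2 in HF.
  destruct HF as [a [b [-> [Ha Hb]]]].
  apply (det_ok _ _ _ _ (P_ok 0)) in Ha. apply (det_ok _ _ _ _ (P_ok 1)) in Hb. simpl in Ha, Hb. subst a b.
  apply inv_mu in HM. destruct HM as [HB _]. apply (det_ok _ _ _ _ BODY_ok) in HB. simpl in HB.
  assert (vx J c x <> 0) as HV. { destruct (vx J c x); simpl in HB; congruence. }
  apply (det_ok _ _ _ _ OUT_ok) in HO. simpl in HO. subst y.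
  exists p. split; auto. apply vx_val; auto.
Qed.

End F5.
Import F5.

Module F6.

Definition NP a b := PComp NPAIR [a; b].
Fixpoint codeprog (p : prog) : prog :=
  match p with
  | PZero => NP (cst 0) (cst 0)
  | PSucc => NP (cst 1) (cst 0)
  | PProj i => NP (cst 2) (cst i)
  | PComp f gs => NP (cst 3) (NP (codeprog f)
       ((fix cl (l : list prog) : prog := match l with [] => cst 0 | g :: l' => NP (codeprog g) (cl l') end) gs))
  | PPrec f g => NP (cst 4) (NP (codeprog f) (codeprog g))
  | PMu f => NP (cst 5) (codeprog f)
  end.
Lemma codeprog_ok p l : eval (codeprog p) l (code p).
Proof.
  revert l. induction p using prog_ind2; intros l; unfold NP.
  - eapply ev_val. solve_ev2. reflexivity.
  - eapply ev_val. solve_ev2. reflexivity.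
  - eapply ev_val. solve_ev2. reflexivity.
  - rewrite code_comp. simpl. eapply evc. constructor. solve_ev2. constructor; [|constructor].
    eapply evc. constructor. apply IHp. constructor; [|constructor].
    + instantiate (1 := lc (map code gs)). induction H; simpl. constructor.
      eapply evc. constructor; [apply H|]. constructor; [apply IHForall|constructor]. apply NPAIR_ok.
    + apply NPAIR_ok.
    + apply NPAIR_ok.
  - rewrite code_prec. eapply evc. constructor. solve_ev2. constructor; [|constructor].
    eapply evc. constructor. apply IHp1. constructor; [apply IHp2|constructor]. apply NPAIR_ok. apply NPAIR_ok.
  - rewrite code_mu. eapply evc. constructor. solve_ev2. constructor; [apply IHp|constructor]. apply NPAIR_ok.
Qed.

Definition CSTCODE := prec1 (NP (cst 0) (cst 0)) (NP (cst 3) (NP (NP (cst 1) (cst 0)) (NP (P 1) (cst 0)))).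
Lemma CSTCODE_ok l : eval CSTCODE l (code (cst (nth 0 l 0))).
Proof.
  unfold CSTCODE, prec1, NP. eapply evc. solve_ev2.
  apply (ev_prec_gen _ _ _ (fun x => code (cst x))).
  - eapply ev_val. solve_ev2. reflexivity.
  - intros x. eapply ev_val. solve_ev2. cbn [nth]. simpl cst. rewrite code_comp. reflexivity.
Qed.
#[export] Hint Resolve CSTCODE_ok : evdb.

Definition FIN := PMu (PComp NSG [PComp TB [P 1; P 2]]).
Definition idx D := code (PComp FIN [cst D; PProj 0]).
Definition IDX := NP (cst 3) (NP (codeprog FIN) (NP CSTCODE (NP (NP (cst 2) (cst 0)) (cst 0)))).
Lemma IDX_ok l : eval IDX l (idx (nth 0 l 0)).
Proof.
  unfold IDX, NP. eapply ev_val. eapply evc. constructor. solve_ev2. constructor; [|constructor].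
  eapply evc. constructor. apply codeprog_ok. constructor; [|constructor]. solve_ev2.
  apply NPAIR_ok. apply NPAIR_ok. cbn [nth]. unfold idx. rewrite code_comp. cbn [map lc]. rewrite code_proj. reflexivity.
Qed.
#[export] Hint Resolve IDX_ok : evdb.

Lemma W_idx D y : W (idx D) y <-> Nat.testbit D y = true.
Proof.
  unfold W, phi, idx. split.
  - intros [v [p [Hc Hev]]]. apply code_inj in Hc. subst p.
    apply inv_comp in Hev. destruct Hev as [ys [HF Hf]]. apply inv_F2_2 in HF.
    destruct HF as [a [b [-> [Ha Hb]]]]. apply (det_ok _ _ _ _ (cst_ok D)) in Ha.
    apply (det_ok _ _ _ _ (P_ok 0)) in Hb. simpl in Hb. subst a b.
    unfold FIN in Hf. apply inv_mu in Hf. destruct Hf as [H0 _].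
    assert (E0 : eval (PComp NSG [PComp TB [P 1; P 2]]) [v; D; y] (nsg (Nat.b2n (Nat.testbit D y)))).
    { clear H0. eapply ev_val. solve_ev2. reflexivity. }
    pose proof (eval_det _ _ _ H0 _ E0) as E1.
    destruct (Nat.testbit D y); simpl in E1; auto; discriminate.
  - intros Hb. exists 0, (PComp FIN [cst D; PProj 0]). split; [reflexivity|].
    eapply evc. constructor. apply cst_ok. constructor. constructor. constructor. simpl.
    unfold FIN. apply (ev_mu_gen _ _ (fun _ => nsg (Nat.b2n (Nat.testbit D y)))).
    + intros z _. eapply ev_val. solve_ev2. reflexivity.
    + rewrite Hb; reflexivity.
    + intros; lia.
Qed.

End F6.
Import F6.

Module F7.

Definition QEL := NP (P 0) (NP (P 1) (P 2)).
Lemma QEL_ok l : eval QEL l (npair (nth 0 l 0) (npair (nth 1 l 0) (nth 2 l 0))).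
Proof. unfold QEL, NP. evt2. Qed.
#[export] Hint Resolve QEL_ok : evdb.
Definition SBODY := EQ (PComp UNIV [P 1; PComp ADD [P 3; PComp POW2 [PComp QEL [P 1; P 2; P 0]]]]) (PComp UNIV [P 1; P 3]).
Definition SEARCH := PMu SBODY.
Definition STEP := PComp ADD [P 1; PComp POW2 [PComp QEL [P 2; P 0; PComp SEARCH [P 2; P 0; P 1]]]].
Definition STAGES := prec2 PZero STEP.
Definition KX := PComp FST [PComp SND [P 2]].
Definition EBODY := PComp NSG [EQ (P 2) (PComp QEL [P 1; KX; PComp SEARCH [P 1; KX; PComp STAGES [KX; P 1]]])].
Definition ENUM := PMu EBODY.
Definition aidx e := code (PComp ENUM [cst e; PProj 0]).
Definition AIDX := NP (cst 3) (NP (codeprog ENUM) (NP CSTCODE (NP (NP (cst 2) (cst 0)) (cst 0)))).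
Lemma AIDX_ok l : eval AIDX l (aidx (nth 0 l 0)).
Proof.
  unfold AIDX, NP. eapply ev_val. eapply evc. constructor. solve_ev2. constructor; [|constructor].
  eapply evc. constructor. apply codeprog_ok. constructor; [|constructor]. solve_ev2.
  apply NPAIR_ok. apply NPAIR_ok. cbn [nth]. unfold aidx. rewrite code_comp. cbn [map lc]. rewrite code_proj. reflexivity.
Qed.
#[export] Hint Resolve AIDX_ok : evdb.

Lemma inv_prec0 f g l y : eval (PPrec f g) (0 :: l) y -> eval f l y.
Proof. intros H; inversion H; subst; auto. Qed.
Lemma inv_precS f g x l y : eval (PPrec f g) (S x :: l) y -> exists r, eval (PPrec f g) (x :: l) r /\ eval g (x :: r :: l) y.
Proof. intros H; inversion H; subst; eauto. Qed.
Lemma ev_prec_upto f g rest (R : nat -> nat) n :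
  eval f rest (R 0) -> (forall x, x < n -> eval g (x :: R x :: rest) (R (S x))) ->
  forall x, x <= n -> eval (PPrec f g) (x :: rest) (R x).
Proof. intros H0 HS x. induction x; intros hx. constructor; auto. econstructor. apply IHx; lia. apply HS; lia. Qed.

Ltac inv_c H := apply inv_comp in H; let ys := fresh "ys" in let HF := fresh "HF" in destruct H as [ys [HF H]].
Ltac inv_p H := apply (det_ok _ _ _ _ (P_ok _)) in H; cbn [nth] in H.

Definition KXv y := fst_ (snd_ y).
Lemma KX_ok l : eval KX l (KXv (nth 2 l 0)).
Proof. unfold KX. evt2. Qed.

Section Learner.
Variable e : nat.
Variable fe : nat -> nat.
Hypothesis Hfe : forall x, phi e x (fe x).

Lemma UNIVe x rest : eval UNIV (e :: x :: rest) (fe x).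
Proof. apply U_complete, Hfe. Qed.
Lemma UNIVe_inv x rest y : eval UNIV (e :: x :: rest) y -> y = fe x.
Proof.
  intros H. apply U_sound in H. eapply phi_det; eauto. destruct (Hfe 0) as [p [Hp _]]; eauto.
Qed.

Definition qel k j := npair e (npair k j).
Definition succ_at S k := exists j, fe (S + 2 ^ qel k j) <> fe S.
Definition isj S k j := fe (S + 2 ^ qel k j) <> fe S /\ forall j', j' < j -> fe (S + 2 ^ qel k j') = fe S.
Definition jmin S k := epsilon (inhabits 0) (isj S k).
Lemma jmin_spec S k : succ_at S k -> isj S k (jmin S k).
Proof.
  intros [j Hj]. unfold jmin. apply epsilon_spec.
  destruct (least_ex (fun j => fe (S + 2 ^ qel k j) <> fe S)) as [j0 [H1 H2]].
  intros n; destruct (Nat.eq_dec (fe (S + 2 ^ qel k n)) (fe S)); auto.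
  eauto. exists j0. split; auto. intros j' hj'. specialize (H2 j' hj').
  destruct (Nat.eq_dec (fe (S + 2 ^ qel k j')) (fe S)); auto; contradiction.
Qed.
Lemma isj_unique S k j j' : isj S k j -> isj S k j' -> j = j'.
Proof.
  intros [A B] [C D]. destruct (Nat.lt_trichotomy j j') as [h|[h|h]]; auto.
  exfalso; apply A, D; auto. exfalso; apply C, B; auto.
Qed.
Fixpoint Dc k := match k with 0 => 0 | S k' => Dc k' + 2 ^ qel k' (jmin (Dc k') k') end.
Definition allsucc k := forall i, i < k -> succ_at (Dc i) i.

Lemma SBODY_ok j k S rest : eval SBODY (j :: e :: k :: S :: rest) (Nat.b2n (fe (S + 2 ^ qel k j) =? fe S)).
Proof.
  unfold SBODY, EQ. eapply evc. constructor; [|constructor; [|constructor]].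
  - eapply evc. constructor. apply P_ok. constructor; [|constructor]. solve_ev2. simpl. apply UNIVe.
  - eapply evc. constructor. apply P_ok. constructor; [apply P_ok|constructor]. simpl. apply UNIVe.
  - eapply ev_val. apply EQN_ok. reflexivity.
Qed.
Lemma SEARCH_ok k S : succ_at S k -> eval SEARCH [e; k; S] (jmin S k).
Proof.
  intros H. destruct (jmin_spec S k H) as [A B]. unfold SEARCH.
  apply (ev_mu_gen _ _ (fun j => Nat.b2n (fe (S + 2 ^ qel k j) =? fe S))).
  - intros z _. apply SBODY_ok.
  - destruct (Nat.eqb_spec (fe (S + 2 ^ qel k (jmin S k))) (fe S)); auto; contradiction.
  - intros z hz. rewrite (B z hz), Nat.eqb_refl. simpl; lia.
Qed.
Lemma SEARCH_inv k S j : eval SEARCH [e; k; S] j -> succ_at S k /\ j = jmin S k.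
Proof.
  intros H. unfold SEARCH in H. apply inv_mu in H. destruct H as [H0 H1].
  pose proof (eval_det _ _ _ H0 _ (SBODY_ok j k S [])) as E0.
  assert (isj S k j) as HI.
  { split. destruct (Nat.eqb_spec (fe (S + 2 ^ qel k j)) (fe S)); simpl in E0; auto; discriminate.
    intros j' hj'. destruct (H1 j' hj') as [v [hv Hv]]. pose proof (eval_det _ _ _ Hv _ (SBODY_ok j' k S [])).
    subst v. destruct (Nat.eqb_spec (fe (S + 2 ^ qel k j')) (fe S)); simpl in hv; auto; lia. }
  assert (succ_at S k) as Hs by (exists j; apply HI).
  split; auto. apply (isj_unique S k); auto. apply jmin_spec; auto.
Qed.
Lemma STEP_ok k : succ_at (Dc k) k -> eval STEP [k; Dc k; e] (Dc (S k)).
Proof.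
  intros H. unfold STEP. eapply evc. constructor; [apply P_ok|constructor; [|constructor]].
  - eapply evc. constructor; [|constructor]. eapply evc. constructor; [apply P_ok|constructor; [apply P_ok|constructor; [|constructor]]].
    eapply evc. constructor; [apply P_ok|constructor; [apply P_ok|constructor; [apply P_ok|constructor]]].
    simpl. apply SEARCH_ok; auto. apply QEL_ok. apply POW2_ok.
  - eapply ev_val. apply ADD_ok. reflexivity.
Qed.
Lemma STEP_inv k S v : eval STEP [k; S; e] v -> succ_at S k /\ v = S + 2 ^ qel k (jmin S k).
Proof.
  intros H. unfold STEP in H. inv_c H. apply inv_F2_2 in HF. destruct HF as [a [b [-> [Ha Hb]]]].
  inv_p Ha. subst a. inv_c Hb. apply inv_F2_1 in HF. destruct HF as [c [-> Hc]].
  inv_c Hc. apply inv_F2_3 in HF. destruct HF as [d1 [d2 [d3 [-> [H1 [H2 H3]]]]]].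
  inv_p H1. inv_p H2. subst d1 d2. inv_c H3. apply inv_F2_3 in HF. destruct HF as [f1 [f2 [f3 [-> [G1 [G2 G3]]]]]].
  inv_p G1. inv_p G2. inv_p G3. subst f1 f2 f3. apply SEARCH_inv in H3. destruct H3 as [Hs Hj]. subst d3.
  apply (det_ok _ _ _ _ QEL_ok) in Hc. apply (det_ok _ _ _ _ POW2_ok) in Hb. apply (det_ok _ _ _ _ ADD_ok) in H.
  cbn [nth] in *. subst. split; auto.
Qed.
Lemma STAGES_ok k : allsucc k -> eval STAGES [k; e] (Dc k).
Proof.
  intros H. unfold STAGES, prec2. eapply evc. constructor; [apply P_ok|constructor; [apply P_ok|constructor]].
  simpl. apply (ev_prec_upto _ _ _ Dc k). constructor. intros x hx. apply STEP_ok. apply H; auto. lia.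
Qed.
Lemma STAGES_inv k S : eval STAGES [k; e] S -> allsucc k /\ S = Dc k.
Proof.
  intros H. unfold STAGES, prec2 in H. inv_c H. apply inv_F2_2 in HF. destruct HF as [a [b [-> [Ha Hb]]]].
  inv_p Ha. inv_p Hb. subst a b. revert S H. induction k; intros S H.
  - apply inv_prec0 in H. inversion H; subst. split; auto. intros i hi; lia.
  - apply inv_precS in H. destruct H as [r [H1 H2]]. apply IHk in H1. destruct H1 as [Ha Hr]. subst r.
    apply STEP_inv in H2. destruct H2 as [Hs ->]. split; auto. intros i hi.
    destruct (Nat.eq_dec i k). subst; auto. apply Ha; lia.
Qed.

Lemma W_aidx y : W (aidx e) y <-> allsucc (S (KXv y)) /\ y = qel (KXv y) (jmin (Dc (KXv y)) (KXv y)).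
Proof.
  unfold W, phi, aidx. split.
  - intros [v [p [Hc Hev]]]. apply code_inj in Hc. subst p.
    inv_c Hev. apply inv_F2_2 in HF. destruct HF as [a [b [-> [Ha Hb]]]].
    apply (det_ok _ _ _ _ (cst_ok e)) in Ha. inv_p Hb. subst a b.
    unfold ENUM in Hev. apply inv_mu in Hev. destruct Hev as [H0 _].
    unfold EBODY in H0. inv_c H0. apply inv_F2_1 in HF. destruct HF as [w [-> Hw]].
    unfold EQ in Hw. inv_c Hw. apply inv_F2_2 in HF. destruct HF as [a [b [-> [Ha Hb]]]].
    inv_p Ha. subst a. inv_c Hb. apply inv_F2_3 in HF. destruct HF as [c1 [c2 [c3 [-> [G1 [G2 G3]]]]]].
    inv_p G1. subst c1. apply (det_ok _ _ _ _ KX_ok) in G2. cbn [nth] in G2. subst c2.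
    inv_c G3. apply inv_F2_3 in HF. destruct HF as [d1 [d2 [d3 [-> [G1 [G2 G4]]]]]].
    inv_p G1. apply (det_ok _ _ _ _ KX_ok) in G2. cbn [nth] in G2. subst d1 d2.
    inv_c G4. apply inv_F2_2 in HF. destruct HF as [f1 [f2 [-> [K1 K2]]]].
    apply (det_ok _ _ _ _ KX_ok) in K1. inv_p K2. cbn [nth] in K1. subst f1 f2.
    apply STAGES_inv in G4. destruct G4 as [Hall ->].
    apply SEARCH_inv in G3. destruct G3 as [Hs ->].
    apply (det_ok _ _ _ _ QEL_ok) in Hb. apply (det_ok _ _ _ _ EQN_ok) in Hw. apply (det_ok _ _ _ _ NSG_ok) in H0.
    cbn [nth] in Hb, Hw, H0. subst.
    split.
    + intros i hi. destruct (Nat.eq_dec i (KXv y)). subst; auto. apply Hall; lia.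
    + destruct (Nat.eqb_spec y (npair e (npair (KXv y) (jmin (Dc (KXv y)) (KXv y))))); simpl in H0; auto; discriminate.
  - intros [Hall Hy]. exists 0, (PComp ENUM [cst e; PProj 0]). split; [reflexivity|].
    eapply evc. constructor. apply cst_ok. constructor. constructor. constructor. cbn [nth].
    unfold ENUM. apply (ev_mu_gen _ _ (fun _ => 0)); [|reflexivity|intros; lia].
    intros z _. unfold EBODY, EQ. eapply evc. constructor; [|constructor].
    + eapply evc. constructor; [apply P_ok|constructor; [|constructor]].
      * eapply evc. constructor; [apply P_ok|constructor; [apply KX_ok|constructor; [|constructor]]].
        -- eapply evc. constructor; [apply P_ok|constructor; [apply KX_ok|constructor; [|constructor]]].
           ++ eapply evc. constructor; [apply KX_ok|constructor; [apply P_ok|constructor]]. cbn [nth].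
              apply STAGES_ok. intros i hi; apply Hall; lia.
           ++ cbn [nth]. apply SEARCH_ok. apply Hall; lia.
        -- apply QEL_ok.
      * eapply ev_val. apply EQN_ok. cbn [nth]. unfold qel in Hy. rewrite <- Hy, Nat.eqb_refl. reflexivity.
    + eapply ev_val. apply NSG_ok. reflexivity.
Qed.
End Learner.

End F7.
Import F7.

Module F8.

Lemma tb_above D x : D < 2 ^ x -> Nat.testbit D x = false.
Proof. intros H. apply Nat.testbit_false. rewrite Nat.div_small; auto. Qed.
Lemma tb_above' D x : D <= x -> Nat.testbit D x = false.
Proof. intros H. apply tb_above. pose proof (pow_gt x). lia. Qed.
Lemma tb_add D x y : Nat.testbit D x = false -> Nat.testbit (D + 2 ^ x) y = (Nat.testbit D y || (x =? y))%bool.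
Proof.
  intros H. rewrite Nat.add_nocarry_lxor.
  - rewrite Nat.lxor_spec, Nat.pow2_bits_eqb. destruct (Nat.eqb_spec x y); subst.
    rewrite H; auto. destruct (Nat.testbit D y); auto.
  - apply Nat.bits_inj_0. intros n. rewrite Nat.land_spec, Nat.pow2_bits_eqb.
    destruct (Nat.eqb_spec x n); subst. rewrite H; auto. destruct (Nat.testbit D n); auto.
Qed.
Lemma tb_lor_add D x : Nat.testbit D x = false -> Nat.lor D (2 ^ x) = D + 2 ^ x.
Proof. intros H. apply Nat.bits_inj. intros n. rewrite Nat.lor_spec, tb_add, Nat.pow2_bits_eqb; auto. Qed.
Lemma tb_nonzero D : D <> 0 -> exists x, x < S D /\ Nat.testbit D x = true.
Proof.
  intros H. destruct (classic (exists x, Nat.testbit D x = true)) as [[x Hx]|Hn].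
  - exists x. split; auto. destruct (Nat.le_gt_cases D x); try lia. rewrite tb_above' in Hx; auto; discriminate.
  - exfalso. apply H, Nat.bits_inj_0. intros n. destruct (Nat.testbit D n) eqn:E; auto. exfalso; apply Hn; eauto.
Qed.

Definition minel D := bmin (fun x => Nat.b2n (Nat.testbit D x)) (S D).
Definition popc D := bsum (fun x => Nat.b2n (Nat.testbit D x)) (S D).
Lemma minel_bit D : D <> 0 -> Nat.testbit D (minel D) = true.
Proof.
  intros H. destruct (tb_nonzero D H) as [x [hx Hx]]. unfold minel.
  destruct (bmin_inv (fun x => Nat.b2n (Nat.testbit D x)) (S D)) as [[A [B C]]|[A B]].
  - destruct (Nat.testbit D (bmin (fun x => Nat.b2n (Nat.testbit D x)) (S D))); auto.
  - exfalso. specialize (B x hx). rewrite Hx in B. simpl in B. lia.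
Qed.
Lemma bsum_bits_ext D N : S D <= N -> bsum (fun x => Nat.b2n (Nat.testbit D x)) N = popc D.
Proof.
  intros H. unfold popc. induction N. lia. destruct (Nat.eq_dec (S D) (S N)).
  rewrite e; auto. simpl. rewrite IHN by lia. rewrite tb_above' by lia. simpl; lia.
Qed.
Lemma bsum_mono F G N : (forall x, F x <= G x) -> bsum F N <= bsum G N.
Proof. intros H; induction N; simpl; auto. specialize (H N); lia. Qed.
Lemma popc_mono A B : (forall x, Nat.testbit A x = true -> Nat.testbit B x = true) -> popc A <= popc B.
Proof.
  intros H. rewrite <- (bsum_bits_ext A (S A + S B)) by lia. rewrite <- (bsum_bits_ext B (S A + S B)) by lia.
  apply bsum_mono. intros x. specialize (H x). destruct (Nat.testbit A x); destruct (Nat.testbit B x); simpl; auto.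
  specialize (H eq_refl); discriminate.
Qed.
Lemma bsum_add_bit D x N : Nat.testbit D x = false ->
  bsum (fun y => Nat.b2n (Nat.testbit (D + 2 ^ x) y)) N = bsum (fun y => Nat.b2n (Nat.testbit D y)) N + Nat.b2n (x <? N).
Proof.
  intros H. induction N; simpl. auto. rewrite IHN, tb_add by auto.
  destruct (Nat.eqb_spec x N).
  - subst. rewrite H. simpl. destruct (Nat.ltb_spec N N); destruct (Nat.ltb_spec N (S N)); simpl; lia.
  - destruct (Nat.ltb_spec x N); destruct (Nat.ltb_spec x (S N)); try lia; destruct (Nat.testbit D N); simpl; lia.
Qed.
Lemma popc_add D x : Nat.testbit D x = false -> popc (D + 2 ^ x) = S (popc D).
Proof.
  intros H. set (N := S (D + 2 ^ x)). pose proof (pow_gt x).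
  rewrite <- (bsum_bits_ext (D + 2 ^ x) N) by lia. rewrite <- (bsum_bits_ext D N) by (unfold N; lia).
  rewrite bsum_add_bit by auto. destruct (Nat.ltb_spec x N). simpl; lia. unfold N in *; lia.
Qed.

Lemma cc_bits T i y : Nat.testbit (content_code T i) y = true <-> exists j, j < i /\ T j = Some y.
Proof.
  induction i; simpl.
  - rewrite Nat.bits_0. split. discriminate. intros [j [h _]]; lia.
  - destruct (T i) as [x|] eqn:E.
    + rewrite Nat.lor_spec, Nat.pow2_bits_eqb, Bool.orb_true_iff, IHi. split.
      * intros [[j [h1 h2]]|h]. exists j; split; auto; lia. apply Nat.eqb_eq in h. subst. exists i; auto.
      * intros [j [h1 h2]]. destruct (Nat.eq_dec j i). subst. right. rewrite E in h2. injection h2; intros; subst.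
        apply Nat.eqb_refl. left. exists j; split; auto; lia.
    + rewrite IHi. split. intros [j [h1 h2]]; exists j; split; auto; lia.
      intros [j [h1 h2]]. destruct (Nat.eq_dec j i). subst; congruence. exists j; split; auto; lia.
Qed.
Lemma cc_sub L T i y : Txt L T -> Nat.testbit (content_code T i) y = true -> L y.
Proof. intros HT H. apply cc_bits in H. destruct H as [j [_ Hj]]. apply HT. exists j; auto. Qed.
Lemma cc_fin L T B : Txt L T -> (forall y, L y <-> Nat.testbit B y = true) ->
  exists n0, forall n, n0 <= n -> content_code T n = B.
Proof.
  intros HT HB.
  assert (forall N, exists n0, forall y, y < N -> Nat.testbit B y = true -> exists j, j < n0 /\ T j = Some y) as A.
  { induction N. exists 0; intros; lia. destruct IHN as [n0 Hn0].
    destruct (Nat.testbit B N) eqn:E.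
    - assert (content T N) as [j Hj] by (apply HT, HB; auto). exists (S (max n0 j)). intros y hy Hy.
      destruct (Nat.eq_dec y N). subst. exists j; split; auto; lia.
      destruct (Hn0 y ltac:(lia) Hy) as [j' [h1 h2]]. exists j'; split; auto; lia.
    - exists n0. intros y hy Hy. destruct (Nat.eq_dec y N). subst; congruence. apply Hn0; auto; lia. }
  destruct (A (S B)) as [n0 Hn0]. exists n0. intros n hn. apply Nat.bits_inj. intros y.
  destruct (Nat.testbit B y) eqn:E.
  - apply cc_bits. destruct (Nat.le_gt_cases (S B) y). rewrite tb_above' in E by lia. discriminate.
    destruct (Hn0 y H E) as [j [h1 h2]]. exists j; split; auto; lia.
  - destruct (Nat.testbit (content_code T n) y) eqn:E2; auto. apply (cc_sub L) in E2; auto.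
    apply HB in E2. congruence.
Qed.

Definition MINEL := PComp (bminP 1 (PComp TB [P 2; P 0])) [SUC; P 0].
Lemma MINEL_ok l : eval MINEL l (minel (nth 0 l 0)).
Proof. unfold MINEL. evt2. Qed.
#[export] Hint Resolve MINEL_ok : evdb.
Definition POPC := PComp (bsumP 1 (PComp TB [P 2; P 0])) [SUC; P 0].
Lemma POPC_ok l : eval POPC l (popc (nth 0 l 0)).
Proof. unfold POPC. evt2. Qed.
#[export] Hint Resolve POPC_ok : evdb.
Definition exv D S e k := sg (bsum (fun j => Nat.b2n (D =? S + 2 ^ npair e (npair k j))) (Datatypes.S D)).
Definition Pex := EQ (P 2) (PComp ADD [P 3; PComp POW2 [PComp QEL [P 4; P 5; P 0]]]).
Definition EX := PComp SG [PComp (bsumP 4 Pex) [SUC; P 0; P 1; P 2; P 3]].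
Lemma EX_ok l : eval EX l (exv (nth 0 l 0) (nth 1 l 0) (nth 2 l 0) (nth 3 l 0)).
Proof. unfold EX, Pex, EQ. evt2. Qed.
#[export] Hint Resolve EX_ok : evdb.
Definition EE := PComp FST [PComp MINEL [P 2]].
Definition KK := PComp PRED [PComp POPC [P 2]].
Definition SS := PComp STAGES [KK; EE].
Definition COND := M (EQ (PComp UNIV [EE; P 2]) (PComp UNIV [EE; SS])) (PComp EX [P 2; SS; EE; KK]).
Definition BR := PComp ITE [COND; PComp IDX [P 2]; PComp AIDX [EE]].
Definition HPROG := PComp (PPrec IDX BR) [PComp SG [P 0]; P 0].

End F8.
Import F8.

Module F9.

Lemma EE_ok l : eval EE l (fst_ (minel (nth 2 l 0))).
Proof. unfold EE. evt2. Qed.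
Lemma KK_ok l : eval KK l (pred (popc (nth 2 l 0))).
Proof. unfold KK. evt2. Qed.

Section L2.
Variable e : nat.
Variable fe : nat -> nat.
Hypothesis Hfe : forall x, phi e x (fe x).
Local Notation Dc := (Dc e fe).
Local Notation allsucc := (allsucc e fe).
Local Notation succ_at := (succ_at e fe).
Local Notation jmin := (jmin e fe).
Local Notation qel := (qel e).

Definition condv D := let k := pred (popc D) in Nat.b2n (fe D =? fe (Dc k)) * exv D (Dc k) e k.
Definition Hval D := if D =? 0 then idx D else if condv D =? 0 then aidx e else idx D.

Lemma SS_ok x r D : fst_ (minel D) = e -> allsucc (pred (popc D)) -> eval SS [x; r; D] (Dc (pred (popc D))).
Proof.
  intros He Ha. unfold SS. eapply evc. constructor; [apply KK_ok|constructor; [apply EE_ok|constructor]].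
  cbn [nth]. rewrite He. apply STAGES_ok; auto.
Qed.
Lemma COND_ok x r D : fst_ (minel D) = e -> allsucc (pred (popc D)) -> eval COND [x; r; D] (condv D).
Proof.
  intros He Ha. unfold COND, M, EQ. eapply evc. constructor; [|constructor; [|constructor]].
  - eapply evc. constructor; [|constructor; [|constructor]].
    + eapply evc. constructor; [apply EE_ok|constructor; [apply P_ok|constructor]]. cbn [nth]. rewrite He. apply UNIVe; auto.
    + eapply evc. constructor; [apply EE_ok|constructor; [apply SS_ok; auto|constructor]]. cbn [nth]. rewrite He. apply UNIVe; auto.
    + apply EQN_ok.
  - eapply evc. constructor; [apply P_ok|constructor; [apply SS_ok; auto|constructor; [apply EE_ok|constructor; [apply KK_ok|constructor]]]].
    apply EX_ok.
  - eapply ev_val. apply MUL_ok. cbn [nth]. unfold condv. rewrite He. reflexivity.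
Qed.
Lemma BR_ok x r D : D <> 0 -> fst_ (minel D) = e -> allsucc (pred (popc D)) ->
  eval BR [x; r; D] (if condv D =? 0 then aidx e else idx D).
Proof.
  intros Hd He Ha.
  unfold BR. eapply evc. constructor; [apply COND_ok; auto|constructor; [eapply evc; [constructor; [apply P_ok|constructor]|apply IDX_ok]|constructor; [|constructor]]].
  + eapply evc. constructor; [apply EE_ok|constructor]. cbn [nth]. rewrite He. apply AIDX_ok.
  + eapply ev_val. apply ITE_ok. cbn [nth]. reflexivity.
Qed.
Lemma Hval0 : Hval 0 = idx 0. Proof. unfold Hval. assert (E : (0 =? 0) = true) by reflexivity. rewrite E. reflexivity. Qed.
Lemma HvalS d : Hval (S d) = if condv (S d) =? 0 then aidx e else idx (S d). Proof. unfold Hval. assert (E : (S d =? 0) = false) by reflexivity. rewrite E. reflexivity. Qed.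
Lemma HPROG_ok D : (D <> 0 -> fst_ (minel D) = e /\ allsucc (pred (popc D))) -> eval HPROG [D] (Hval D).
Proof.
  intros H. unfold HPROG. eapply evc.
  constructor; [eapply evc; [constructor; [apply P_ok|constructor] | apply SG_ok]|constructor; [apply P_ok|constructor]].
  cbn [nth]. destruct D as [|d].
  - rewrite Hval0. cbn [sg]. constructor. apply IDX_ok.
  - rewrite HvalS. destruct (H ltac:(lia)) as [He Ha]. cbn [sg].
    apply (ev_precS _ _ 0 [S d] (idx (S d))). constructor. apply IDX_ok.
    apply BR_ok; auto.
Qed.
End L2.

End F9.
Import F9.

Module F10.

Lemma HvalNZ e fe D : D <> 0 -> Hval e fe D = if condv e fe D =? 0 then aidx e else idx D.
Proof. intros H. destruct D. lia. apply HvalS. Qed.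

Definition textB B : text := fun n => if Nat.testbit B n then Some n else None.
Lemma textB_Txt B : Txt (fun y => Nat.testbit B y = true) (textB B).
Proof.
  intros x. unfold content, textB. split.
  - intros [n Hn]. destruct (Nat.testbit B n) eqn:E; try discriminate. injection Hn; intros; subst; auto.
  - intros H. exists x. rewrite H. auto.
Qed.

Section L3.
Variable e : nat.
Variable fe : nat -> nat.
Hypothesis Hfe : forall x, phi e x (fe x).
Local Notation Dc := (Dc e fe).
Local Notation allsucc := (allsucc e fe).
Local Notation succ_at := (succ_at e fe).
Local Notation jmin := (jmin e fe).
Local Notation qel := (qel e).
Local Notation Hval := (Hval e fe).
Local Notation condv := (condv e fe).

Definition q i := qel i (jmin (Dc i) i).
Lemma fst_qel k j : fst_ (qel k j) = e. Proof. unfold F7.qel. apply fst_npair. Qed.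
Lemma KXv_qel k j : KXv (qel k j) = k. Proof. unfold KXv, F7.qel. rewrite snd_npair, fst_npair. auto. Qed.
Lemma qel_inj k j k' j' : qel k j = qel k' j' -> k = k' /\ j = j'.
Proof. unfold F7.qel. intros H. apply npair_inj in H. destruct H as [_ H]. apply npair_inj in H. auto. Qed.
Lemma Dc_S k : Dc (S k) = Dc k + 2 ^ q k. Proof. reflexivity. Qed.
Lemma Dc_bits k : forall y, Nat.testbit (Dc k) y = true <-> exists i, i < k /\ y = q i.
Proof.
  induction k; intros y.
  - simpl. rewrite Nat.bits_0. split. discriminate. intros [i [h _]]; lia.
  - rewrite Dc_S. assert (Nat.testbit (Dc k) (q k) = false) as Hn.
    { destruct (Nat.testbit (Dc k) (q k)) eqn:E; auto. apply IHk in E. destruct E as [i [hi E]].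
      unfold q in E. apply qel_inj in E. lia. }
    rewrite tb_add by auto. rewrite Bool.orb_true_iff, IHk. split.
    + intros [[i [h1 h2]]|h]. exists i; split; auto; lia. apply Nat.eqb_eq in h. exists k; split; auto.
    + intros [i [h1 h2]]. destruct (Nat.eq_dec i k). subst. right. apply Nat.eqb_refl.
      left. exists i; split; auto; lia.
Qed.
Lemma Dc_notin k j : Nat.testbit (Dc k) (qel k j) = false.
Proof.
  destruct (Nat.testbit (Dc k) (qel k j)) eqn:E; auto. apply Dc_bits in E. destruct E as [i [hi E]].
  unfold q in E. apply qel_inj in E. lia.
Qed.
Lemma popc_Dc k : popc (Dc k) = k.
Proof. induction k. reflexivity. rewrite Dc_S, popc_add. lia. apply Dc_notin. Qed.
Lemma allsucc_mono k k' : allsucc k -> k' <= k -> allsucc k'.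
Proof. intros H h i hi. apply H; lia. Qed.
Lemma exv_spec D S k : exv D S e k <> 0 <-> exists j, j < Datatypes.S D /\ D = S + 2 ^ qel k j.
Proof.
  unfold exv. rewrite ne_sg, bsum_pos. unfold F7.qel. split.
  - intros [j [h1 h2]]. exists j. split; auto. apply ne_b2n in h2; auto.
  - intros [j [h1 h2]]. exists j. split; auto. apply ne_b2n; auto.
Qed.
Lemma condv_spec D : condv D <> 0 <->
  fe D = fe (Dc (pred (popc D))) /\ exists j, j < S D /\ D = Dc (pred (popc D)) + 2 ^ qel (pred (popc D)) j.
Proof. unfold F9.condv. cbv zeta. rewrite ne_mul, ne_b2n, exv_spec. tauto. Qed.

Lemma W_aidx' y : W (aidx e) y <-> allsucc (S (KXv y)) /\ y = q (KXv y).
Proof. rewrite (W_aidx e fe Hfe). unfold q. tauto. Qed.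

Lemma fe_Dc_S k : succ_at (Dc k) k -> fe (Dc (S k)) <> fe (Dc k).
Proof. intros H. destruct (jmin_spec e fe (Dc k) k H) as [A _]. rewrite Dc_S. exact A. Qed.

Section Succ.
Hypothesis Hs : forall k, succ_at (Dc k) k.
Definition Linf y := exists i, y = q i.
Lemma W_inf y : W (aidx e) y <-> Linf y.
Proof.
  rewrite W_aidx'. split.
  - intros [_ H]. eexists; eauto.
  - intros [i ->]. unfold q. rewrite KXv_qel. split; auto. intros j _; apply Hs.
Qed.
Lemma Hval_inf D : D <> 0 -> (forall y, Nat.testbit D y = true -> Linf y) -> Hval D = aidx e.
Proof.
  intros Hd HD. rewrite HvalNZ by auto. destruct (Nat.eqb_spec (condv D) 0); [reflexivity|].
  apply condv_spec in n. destruct n as [Hf [j [hj HD']]].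
  set (k := pred (popc D)) in *.
  assert (Nat.testbit D (qel k j) = true) as Hb.
  { rewrite HD', tb_add by apply Dc_notin. rewrite Nat.eqb_refl. apply Bool.orb_true_r. }
  apply HD in Hb. destruct Hb as [i Hi]. unfold q in Hi. apply qel_inj in Hi. destruct Hi as [-> ->].
  exfalso. apply (fe_Dc_S i (Hs i)). rewrite Dc_S. unfold q. rewrite <- HD'. auto.
Qed.
Lemma learns_inf : TxtSdEx_learns (code HPROG) Linf.
Proof.
  intros T HT. exists (fun i => Hval (content_code T i)). split.
  - intros i. exists HPROG. split; [reflexivity|]. apply HPROG_ok; auto. intros Hd. split.
    + pose proof (minel_bit _ Hd) as Hb. apply (cc_sub Linf T) in Hb; auto. destruct Hb as [j ->].
      unfold q. apply fst_qel.
    + intros j _. apply Hs.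
  - assert (content T (q 0)) as [n Hn] by (apply HT; exists 0; auto).
    exists (S n). intros m hm.
    assert (forall m, S n <= m -> Hval (content_code T m) = aidx e) as A.
    { intros m' hm'. apply Hval_inf.
      - intros E. assert (Nat.testbit (content_code T m') (q 0) = true) as Hb.
        { apply cc_bits. exists n; split; auto; lia. }
        rewrite E, Nat.bits_0 in Hb. discriminate.
      - intros y Hy. apply (cc_sub Linf T) in Hy; auto. }
    rewrite (A m hm), (A (S n) (le_n _)). split; [reflexivity|]. intros x. rewrite W_inf. split; apply HT.
Qed.
Definition Tinf : text := fun n => Some (q n).
Lemma cc_Tinf n : content_code Tinf n = Dc n.
Proof.
  induction n. reflexivity. simpl. rewrite IHn. unfold Tinf. rewrite tb_lor_add. reflexivity.
  unfold q. apply Dc_notin.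
Qed.
Lemma e_fail_inf : ~ TxtSdEx_learns e Linf.
Proof.
  intros H. destruct (H Tinf) as [p [Hp [n0 Hn0]]].
  - intros x. unfold content, Tinf, Linf. split. intros [n Hn]. injection Hn; intros; subst; eauto.
    intros [i ->]. exists i; auto.
  - assert (forall n, p n = fe (Dc n)) as Hpn.
    { intros n. specialize (Hp n). rewrite cc_Tinf in Hp. eapply phi_det; eauto. }
    destruct (Hn0 (S n0) ltac:(lia)) as [E _]. rewrite !Hpn in E. apply (fe_Dc_S n0 (Hs n0)). auto.
Qed.
End Succ.

Section Fail.
Variable k : nat.
Hypothesis Ha : allsucc k.
Hypothesis Hn : ~ succ_at (Dc k) k.
Definition B2 := Dc k + 2 ^ qel k 0.
Lemma Hn' j : fe (Dc k + 2 ^ qel k j) = fe (Dc k).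
Proof. destruct (Nat.eq_dec (fe (Dc k + 2 ^ qel k j)) (fe (Dc k))); auto. exfalso; apply Hn; exists j; auto. Qed.
Lemma B2_bits y : Nat.testbit B2 y = true <-> Nat.testbit (Dc k) y = true \/ y = qel k 0.
Proof.
  unfold B2. rewrite tb_add by apply Dc_notin. rewrite Bool.orb_true_iff, Nat.eqb_eq. split; intros [h|h]; auto.
Qed.
Lemma popc_B2 : popc B2 = S k. Proof. unfold B2. rewrite popc_add, popc_Dc; auto. apply Dc_notin. Qed.
Lemma W_fin y : W (aidx e) y <-> Nat.testbit (Dc k) y = true.
Proof.
  rewrite W_aidx', Dc_bits. split.
  - intros [H1 H2]. exists (KXv y). split; auto. destruct (Nat.lt_ge_cases (KXv y) k); auto.
    exfalso. apply Hn. apply H1. lia.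
  - intros [i [hi ->]]. unfold q. rewrite KXv_qel. split; auto. intros j hj. apply Ha. lia.
Qed.
Lemma sub_B2_ok D : (forall y, Nat.testbit D y = true -> Nat.testbit B2 y = true) ->
  D <> 0 -> fst_ (minel D) = e /\ allsucc (pred (popc D)).
Proof.
  intros HD Hd. split.
  - pose proof (minel_bit _ Hd) as Hb. apply HD, B2_bits in Hb. destruct Hb as [Hb|Hb].
    + apply Dc_bits in Hb. destruct Hb as [i [_ Hb]]. rewrite Hb. unfold q. apply fst_qel.
    + rewrite Hb. apply fst_qel.
  - apply (allsucc_mono k); auto. pose proof (popc_mono D B2 HD). rewrite popc_B2 in H. lia.
Qed.
Lemma learns_finite B : (forall y, Nat.testbit B y = true -> Nat.testbit B2 y = true) ->
  (forall y, W (Hval B) y <-> Nat.testbit B y = true) ->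
  TxtSdEx_learns (code HPROG) (fun y => Nat.testbit B y = true).
Proof.
  intros HB HW T HT. exists (fun i => Hval (content_code T i)). split.
  - intros i. exists HPROG. split; [reflexivity|]. apply HPROG_ok; auto. apply sub_B2_ok.
    intros y Hy. apply HB. apply (cc_sub _ T i y HT Hy).
  - destruct (cc_fin _ T B HT (fun y => iff_refl _)) as [n0 Hn0]. exists n0. intros n hn.
    rewrite (Hn0 n hn), (Hn0 n0 (le_n _)). split; [reflexivity|]. intros x. rewrite HW. split; apply HT.
Qed.
Lemma Hval_B1 y : W (Hval (Dc k)) y <-> Nat.testbit (Dc k) y = true.
Proof.
  destruct (Nat.eq_dec k 0) as [E0|Enz].
  - rewrite E0. simpl F7.Dc. rewrite Hval0, W_idx. tauto.
  - assert (Ek : k = S (pred k)) by lia.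
    assert (Dc k <> 0) as Hd.
    { intros E. assert (Nat.testbit (Dc k) (q (pred k)) = true) as Hb by (apply Dc_bits; exists (pred k); split; auto; lia).
      rewrite E, Nat.bits_0 in Hb; discriminate. }
    rewrite HvalNZ by auto.
    assert (condv (Dc k) = 0) as Hc.
    { destruct (Nat.eq_dec (condv (Dc k)) 0); auto. apply condv_spec in n. destruct n as [Hf _].
      rewrite popc_Dc in Hf. exfalso. apply (fe_Dc_S (pred k)). apply Ha; lia. rewrite <- Ek. auto. }
    rewrite Hc, Nat.eqb_refl. cbv iota. apply W_fin.
Qed.
Lemma Hval_B2 y : W (Hval B2) y <-> Nat.testbit B2 y = true.
Proof.
  assert (B2 <> 0) as Hd.
  { intros E. assert (Nat.testbit B2 (qel k 0) = true) as Hb by (apply B2_bits; auto).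
    rewrite E, Nat.bits_0 in Hb; discriminate. }
  rewrite HvalNZ by auto.
  assert (condv B2 <> 0) as Hc.
  { apply condv_spec. rewrite popc_B2. simpl pred. split. unfold B2. apply Hn'.
    exists 0. split. lia. reflexivity. }
  destruct (Nat.eqb_spec (condv B2) 0); try contradiction. apply W_idx.
Qed.
Lemma W_of_learner B : TxtSdEx_learns e (fun y => Nat.testbit B y = true) ->
  forall y, W (fe B) y <-> Nat.testbit B y = true.
Proof.
  intros H. destruct (H (textB B) (textB_Txt B)) as [p [Hp [n0 Hn0]]].
  destruct (cc_fin _ _ B (textB_Txt B) (fun y => iff_refl _)) as [n1 Hn1].
  set (n := max n0 n1). assert (p n = fe B) as E.
  { specialize (Hp n). rewrite Hn1 in Hp by lia. eapply phi_det; eauto. }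
  destruct (Hn0 n ltac:(lia)) as [E1 HW]. intros y. rewrite <- E, E1, HW. apply textB_Txt.
Qed.
Lemma e_fail_fin : TxtSdEx_learns e (fun y => Nat.testbit (Dc k) y = true) ->
  TxtSdEx_learns e (fun y => Nat.testbit B2 y = true) -> False.
Proof.
  intros H1 H2. pose proof (W_of_learner _ H1) as W1. pose proof (W_of_learner _ H2) as W2.
  assert (fe B2 = fe (Dc k)) as E by (unfold B2; apply Hn').
  assert (Nat.testbit B2 (qel k 0) = true) as Hb by (apply B2_bits; auto).
  apply W2 in Hb. rewrite E, W1, Dc_notin in Hb. discriminate.
Qed.
End Fail.
End L3.


End F10.
Import F10.

Theorem theorem9 :
  exists C : lang_class, in_TxtSdEx C /\ ~ in_RTxtSdEx C.
Proof.
  exists (fun L => TxtSdEx_learns (code HPROG) L). split.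
  - exists (code HPROG). intros L HL. exact HL.
  - intros [e [Htot Hl]].
    set (fe := fun x => epsilon (inhabits 0) (fun y => phi e x y)).
    assert (Hfe : forall x, phi e x (fe x)) by (intros x; apply epsilon_spec, Htot).
    destruct (classic (forall k, succ_at e fe (F7.Dc e fe k) k)) as [Hs|Hns].
    + apply (e_fail_inf e fe Hfe Hs). apply Hl. apply learns_inf; auto.
    + destruct (least_ex (fun k => ~ succ_at e fe (F7.Dc e fe k) k)) as [k [Hk Hmin]].
      { intros n; apply classic. }
      { apply not_all_ex_not; auto. }
      assert (Ha : allsucc e fe k) by (intros i hi; apply NNPP, Hmin; auto).
      eapply (e_fail_fin e fe Hfe k); try eassumption.
      * apply Hl. eapply (learns_finite e fe Hfe k); try eassumption.
        intros y Hy. apply B2_bits; auto.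
        eapply (Hval_B1 e fe Hfe k); eassumption.
      * apply Hl. eapply (learns_finite e fe Hfe k); try eassumption.
        intros y Hy; exact Hy. eapply (Hval_B2 e fe k); eassumption.
Qed.
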